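(* Under the assumptions of the context, the linear program $\mathbf L_H^{\mathcal X,\infty,\mathcal T}$ has a finite optimal value $\Psi^{\mathcal X,\infty,\mathcal T}(a,\mathbf C)$, attained by an optimal solution. For every feasible point of $\mathbf L_H^{\mathcal X,\infty,\mathcal T}$, the semi-static strategy which holds, for each $n$, the claim paying $\bar e^1_n(X_{t_n})+\bar e^2_n(X_{t_n})$ at $t_n$, additionally holds the claim paying $\bar v_N(X_{t_N})$ at $t_N$, and holds $\tilde d^1_n(X_{t_n})$ shares over $[t_n,t_{n+1}]$ before exercise and $\tilde d^2_n(X_{t_n})$ shares from the exercise date on, super-replicates the American claim for all exercise dates in $\mathcal T$ and along all non-negative price paths; its cost is the objective value. Consequently \[ \inf_{\mathcal S^{\mathbb R^+,\mathcal T}(a)}H\le\Psi^{\mathcal X,\infty,\mathcal T}(a,\mathbf C). \]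
   Context: Fix $N\ge1$, $J\ge1$, times $0=t_0<t_1<\dots<t_N=T$, $\mathcal T=\{t_1,\dots,t_N\}$, $s_0>0$, strikes $0=x_0<x_1<\dots<x_J$ (discounted prices, zero interest). Call prices $c_{j,n}$ (payoff $(X_{t_n}-x_j)^+$ at $t_n$, $c_{0,n}=s_0$) satisfy: $s_0=c_{0,n}>c_{1,n}>\dots>c_{J,n}>0$; $1>\frac{c_{0,n}-c_{1,n}}{x_1}>\frac{c_{1,n}-c_{2,n}}{x_2-x_1}>\dots>\frac{c_{J-1,n}-c_{J,n}}{x_J-x_{J-1}}>0$; $c_{j,n+1}>c_{j,n}$ for $1\le j\le J$, $1\le n\le N-1$. Let $\hat p_{0,n}=1-\frac{s_0-c_{1,n}}{x_1}$, $\hat p_{j,n}=\frac{c_{j-1,n}-c_{j,n}}{x_j-x_{j-1}}-\frac{c_{j,n}-c_{j+1,n}}{x_{j+1}-x_j}$ ($1\le j<J$), $\hat p_{J,n}=\frac{c_{J-1,n}-c_{J,n}}{x_J-x_{J-1}}$, $\hat p_{J+1,n}=c_{J,n}$. The payoff $a:[0,\infty)\times\mathcal T\to[0,\infty)$ is convex in its first argument with $\ell_n:=\lim_{x\uparrow\infty}a(x,t_n)/x<R<\infty$. $\mathbf L_H^{\mathcal X,\infty,\mathcal T}$: over reals $e^1_{j,n},e^2_{j,n},v_{j,n}$ ($0\le j\le J+1$, $1\le n\le N$), $d^1_{j,n},d^2_{j,n}$ ($1\le n\le N-1$), with $e^1_{j,N}=e^2_{j,1}=0$, minimise $\sum_n\sum_{j=0}^{J+1}(e^1_{j,n}+e^2_{j,n})\hat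 p_{j,n}+\sum_{j=0}^{J+1}v_{j,N}\hat p_{j,N}$ subject to $v_{j,n}\ge0$ and: (i) $v_{j,n}\ge a(x_j,t_n)$ ($0\le j\le J$), $v_{J+1,n}\ge\ell_n$; (ii) $e^1_{j,n}+e^2_{k,n+1}+(x_k-x_j)d^1_{j,n}\ge0$ ($0\le j,k\le J$), $e^1_{J+1,n}-d^1_{J+1,n}\ge0$, $e^2_{J+1,n+1}+d^1_{j,n}\ge0$ ($0\le j\le J$), $e^1_{J+1,n}+e^2_{J+1,n+1}\ge0$; (iii) $e^1_{j,n}+e^2_{k,n+1}+(x_k-x_j)d^2_{j,n}-v_{j,n}+v_{k,n+1}\ge0$ ($0\le j,k\le J$), $e^1_{J+1,n}-d^2_{J+1,n}-v_{J+1,n}\ge0$, $e^2_{J+1,n+1}+d^2_{j,n}+v_{J+1,n+1}\ge0$ ($0\le j\le J$), $e^1_{J+1,n}+e^2_{J+1,n+1}-v_{J+1,n}+v_{J+1,n+1}\ge0$ (with $1\le n\le N$ in (i), $1\le n\le N-1$ in (ii),(iii)). Extended linear interpolation of $(h_0,\dots,h_{J+1})$: $\bar h(x)=\frac{x_{j+1}-x}{x_{j+1}-x_j}h_j+\frac{x-x_j}{x_{j+1}-x_j}h_{j+1}$ on $[x_j,x_{j+1}]$, $j<J$, and $\bar h(x)=h_J+(x-x_J)h_{J+1}$ for $x\ge x_J$; the claim paying $\bar h(X_{t_n})$ at $t_n$ is a portfolio of bond, stock and calls of maturity $t_n$. Mixed interpolation: with $u^1_{j,n}=\frac{e^1_{j+1,n}-e^1_{j,n}}{x_{j+1}-x_j}$,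 $u^2_{j,n}=\frac{(e^1_{j+1,n}-v_{j+1,n})-(e^1_{j,n}-v_{j,n})}{x_{j+1}-x_j}$: $\tilde d^\delta_n(x_j)=d^\delta_{j,n}$; on $(x_j,x_{j+1})$, $\tilde d^\delta_n=d^\delta_{j,n}$ if $d^\delta_{j,n}\le u^\delta_{j,n}$, $=d^\delta_{j+1,n}$ if $d^\delta_{j,n}>u^\delta_{j,n}\le d^\delta_{j+1,n}$, $=u^\delta_{j,n}$ if $d^\delta_{j+1,n}<u^\delta_{j,n}<d^\delta_{j,n}$; for $x>x_J$, $\tilde d^1_n(x)=\min\{d^1_{J,n},e^1_{J+1,n}\}$, $\tilde d^2_n(x)=\min\{d^2_{J,n},e^1_{J+1,n}-v_{J+1,n}\}$. $\mathcal S^{\mathbb R^+,\mathcal T}(a)$: semi-static strategies (static portfolio of bonds, stock and traded calls with cost $H$ computed from the call prices; bounded stock holdings at times $t_n$, $1\le n\le N-1$, depending on the path so far and, after exercise, on the exercise time) whose terminal payoff is $\ge a(x_\rho,\rho)$ for all paths in $[0,\infty)^N$ and all exercise times $\rho\in\mathcal T$. *)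

(* Defs.v *)
From Stdlib Require Import Reals Lra Lia.
Open Scope R_scope.

Fixpoint sum_lt (k : nat) (f : nat -> R) : R :=
  match k with O => 0 | S k' => sum_lt k' f + f k' end.

(* sumR m n f = f m + f (m+1) + ... + f n  (empty if n < m) *)
Definition sumR (m n : nat) (f : nat -> R) : R :=
  sum_lt (S n - m) (fun i => f (m + i)%nat).

(* strikes x_0 = 0 < x_1 < ... < x_J ; calls c j n = price of (X_{t_n}-x_j)^+ *)
Definition market_assumptions (N J : nat) (t : nat -> R) (s0 : R)
    (x : nat -> R) (c : nat -> nat -> R) : Prop :=
  (1 <= N)%nat /\ (1 <= J)%nat /\
  t 0%nat = 0 /\ (forall n, (n < N)%nat -> t n < t (S n)) /\
  0 < s0 /\
  x 0%nat = 0 /\ (forall j, (j < J)%nat -> x j < x (S j)) /\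
  (forall n, (1 <= n <= N)%nat ->
     c 0%nat n = s0 /\
     (forall j, (j < J)%nat -> c (S j) n < c j n) /\
     0 < c J n /\
     (s0 - c 1%nat n) / x 1%nat < 1 /\
     (forall j, (1 <= j < J)%nat ->
        (c j n - c (S j) n) / (x (S j) - x j)
          < (c (j - 1)%nat n - c j n) / (x j - x (j - 1)%nat)) /\
     0 < (c (J - 1)%nat n - c J n) / (x J - x (J - 1)%nat)) /\
  (forall j n, (1 <= j <= J)%nat -> (1 <= n <= N - 1)%nat -> c j n < c j (S n)).

Definition payoff_assumptions (N : nat) (t : nat -> R) (a : R -> R -> R)
    (l : nat -> R) : Prop :=
  forall n, (1 <= n <= N)%nat ->
    (forall y, 0 <= y -> 0 <= a y (t n)) /\
    (forall y z lam, 0 <= y -> 0 <= z -> 0 <= lam <= 1 ->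
       a (lam * y + (1 - lam) * z) (t n) <= lam * a y (t n) + (1 - lam) * a z (t n)) /\
    (forall eps, 0 < eps -> exists M, forall y, M < y -> Rabs (a y (t n) / y - l n) < eps).

Definition phat (J : nat) (s0 : R) (x : nat -> R) (c : nat -> nat -> R)
    (j n : nat) : R :=
  if Nat.eqb j 0 then 1 - (s0 - c 1%nat n) / x 1%nat
  else if Nat.ltb j J then
    (c (j - 1)%nat n - c j n) / (x j - x (j - 1)%nat)
    - (c j n - c (S j) n) / (x (S j) - x j)
  else if Nat.eqb j J then (c (J - 1)%nat n - c J n) / (x J - x (J - 1)%nat)
  else if Nat.eqb j (S J) then c J n
  else 0.

Record lpvar := LPvar {
  e1 : nat -> nat -> R;
  e2 : nat -> nat -> R;
  v  : nat -> nat -> R;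
  d1 : nat -> nat -> R;
  d2 : nat -> nat -> R }.

Definition lp_feasible (N J : nat) (t : nat -> R) (x : nat -> R)
    (a : R -> R -> R) (l : nat -> R) (z : lpvar) : Prop :=
  (forall j, (j <= S J)%nat -> e1 z j N = 0 /\ e2 z j 1%nat = 0) /\
  (forall j n, (j <= S J)%nat -> (1 <= n <= N)%nat -> 0 <= v z j n) /\
  (* (i) *)
  (forall n, (1 <= n <= N)%nat ->
     (forall j, (j <= J)%nat -> a (x j) (t n) <= v z j n) /\ l n <= v z (S J) n) /\
  (* (ii) *)
  (forall n, (1 <= n <= N - 1)%nat ->
     (forall j k, (j <= J)%nat -> (k <= J)%nat ->
        0 <= e1 z j n + e2 z k (S n) + (x k - x j) * d1 z j n) /\
     0 <= e1 z (S J) n - d1 z (S J) n /\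
     (forall j, (j <= J)%nat -> 0 <= e2 z (S J) (S n) + d1 z j n) /\
     0 <= e1 z (S J) n + e2 z (S J) (S n)) /\
  (* (iii) *)
  (forall n, (1 <= n <= N - 1)%nat ->
     (forall j k, (j <= J)%nat -> (k <= J)%nat ->
        0 <= e1 z j n + e2 z k (S n) + (x k - x j) * d2 z j n - v z j n + v z k (S n)) /\
     0 <= e1 z (S J) n - d2 z (S J) n - v z (S J) n /\
     (forall j, (j <= J)%nat -> 0 <= e2 z (S J) (S n) + d2 z j n + v z (S J) (S n)) /\
     0 <= e1 z (S J) n + e2 z (S J) (S n) - v z (S J) n + v z (S J) (S n)).

Definition lp_objective (N J : nat) (s0 : R) (x : nat -> R) (c : nat -> nat -> R)
    (z : lpvar) : R :=
  sumR 1 N (fun n => sumR 0 (S J) (fun j =>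
     (e1 z j n + e2 z j n) * phat J s0 x c j n))
  + sumR 0 (S J) (fun j => v z j N * phat J s0 x c j N).

Definition seg (x : nat -> R) (h : nat -> R) (j : nat) (y : R) : R :=
  ((x (S j) - y) * h j + (y - x j) * h (S j)) / (x (S j) - x j).

Fixpoint hbar_rec (J : nat) (x : nat -> R) (h : nat -> R) (y : R) (j m : nat) : R :=
  match m with
  | O => h J + (y - x J) * h (S J)
  | S m' => if Rle_dec y (x (S j)) then seg x h j y else hbar_rec J x h y (S j) m'
  end.

(* hbar h y : on [x_j, x_{j+1}] (j < J) linear interpolation,
   for y >= x_J : h_J + (y - x_J) h_{J+1} *)
Definition hbar (J : nat) (x : nat -> R) (h : nat -> R) (y : R) : R :=
  hbar_rec J x h y 0 J.

Definition mix_inner (x : nat -> R) (d u : nat -> R) (j : nat) : R :=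
  if Rle_dec (d j) (u j) then d j
  else if Rle_dec (u j) (d (S j)) then d (S j)
  else u j.

Fixpoint mix_rec (x : nat -> R) (d u : nat -> R) (tail : R) (y : R) (j m : nat) : R :=
  if Rle_dec y (x j) then d j
  else match m with
       | O => tail
       | S m' => if Rlt_dec y (x (S j)) then mix_inner x d u j
                 else mix_rec x d u tail y (S j) m'
       end.

Definition mixinterp (J : nat) (x : nat -> R) (d u : nat -> R) (tail y : R) : R :=
  mix_rec x d u tail y 0 J.

Definition u1 (x : nat -> R) (z : lpvar) (n j : nat) : R :=
  (e1 z (S j) n - e1 z j n) / (x (S j) - x j).
Definition u2 (x : nat -> R) (z : lpvar) (n j : nat) : R :=
  ((e1 z (S j) n - v z (S j) n) - (e1 z j n - v z j n)) / (x (S j) - x j).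

Definition dtilde1 (J : nat) (x : nat -> R) (z : lpvar) (n : nat) (y : R) : R :=
  mixinterp J x (fun j => d1 z j n) (u1 x z n)
            (Rmin (d1 z J n) (e1 z (S J) n)) y.
Definition dtilde2 (J : nat) (x : nat -> R) (z : lpvar) (n : nat) (y : R) : R :=
  mixinterp J x (fun j => d2 z j n) (u2 x z n)
            (Rmin (d2 z J n) (e1 z (S J) n - v z (S J) n)) y.

(* static part: [bond] units of bond, [calls j n] units of the call with strike x_j
   and maturity t_n (j = 0 is the stock, as c 0 n = s0 and x_0 = 0);
   dynamic part: [delta n X rho] shares held over [t_n, t_{n+1}] (1 <= n <= N-1),
   along the path X (X i = X_{t_i}, 1 <= i <= N) with exercise time t_rho. *)
Record strategy := Strategy {
  bond  : R;
  calls : nat -> nat -> R;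
  delta : nat -> (nat -> R) -> nat -> R }.

Definition cost (N J : nat) (c : nat -> nat -> R) (St : strategy) : R :=
  bond St + sumR 1 N (fun n => sumR 0 J (fun j => calls St j n * c j n)).

Definition strat_payoff (N J : nat) (x : nat -> R) (St : strategy)
    (X : nat -> R) (rho : nat) : R :=
  bond St + sumR 1 N (fun n => sumR 0 J (fun j => calls St j n * Rmax (X n - x j) 0))
  + sumR 1 (N - 1) (fun n => delta St n X rho * (X (S n) - X n)).

Definition nonneg_path (N : nat) (X : nat -> R) : Prop :=
  forall i, (1 <= i <= N)%nat -> 0 <= X i.

Definition in_SSS (N J : nat) (t : nat -> R) (x : nat -> R) (a : R -> R -> R)
    (St : strategy) : Prop :=
  (forall n X Y rho, (1 <= n <= N - 1)%nat ->
     (forall i, (1 <= i <= n)%nat -> X i = Y i) -> delta St n X rho = delta St n Y rho) /\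
  (* dependence on the exercise time only once exercise has occurred *)
  (forall n X rho rho', (1 <= n <= N - 1)%nat ->
     (1 <= rho <= N)%nat -> (1 <= rho' <= N)%nat ->
     ((rho <= n)%nat -> rho' = rho) -> ((n < rho)%nat -> (n < rho')%nat) ->
     delta St n X rho = delta St n X rho') /\
  (exists B, forall n X rho, (1 <= n <= N - 1)%nat -> nonneg_path N X ->
     (1 <= rho <= N)%nat -> Rabs (delta St n X rho) <= B) /\
  (forall X rho, nonneg_path N X -> (1 <= rho <= N)%nat ->
     a (X rho) (t rho) <= strat_payoff N J x St X rho).

(* decomposition hbar h (y) = h_0 + sum_{j=0}^J gamma j (y - x_j)^+ for y >= 0 *)
Definition slope (J : nat) (x : nat -> R) (h : nat -> R) (j : nat) : R :=
  if Nat.ltb j J then (h (S j) - h j) / (x (S j) - x j) else h (S J).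

Definition gamma (J : nat) (x : nat -> R) (h : nat -> R) (j : nat) : R :=
  if Nat.eqb j 0 then slope J x h 0 else slope J x h j - slope J x h (j - 1)%nat.

Definition lp_strategy (N J : nat) (x : nat -> R) (z : lpvar) : strategy :=
  Strategy
    (sumR 1 N (fun n => e1 z 0%nat n + e2 z 0%nat n) + v z 0%nat N)
    (fun j n => gamma J x (fun i => e1 z i n) j + gamma J x (fun i => e2 z i n) j
                + (if Nat.eqb n N then gamma J x (fun i => v z i N) j else 0))
    (fun n X rho => if Nat.ltb n rho then dtilde1 J x z n (X n)
                    else dtilde2 J x z n (X n)).

(* Main.v *)
Require Import Defs.
From Stdlib Require Import Reals Lra Lia FunctionalExtensionality List Setoid Morphisms.
Import ListNotations.
Open Scope R_scope.

Lemma sum_lt_ext k f g : (forall i, (i < k)%nat -> f i = g i) -> sum_lt k f = sum_lt k g.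
Proof. induction k; simpl; intros H; auto. rewrite IHk by (intros; apply H; lia). rewrite H by lia. auto. Qed.

Lemma sum_lt_plus k f g : sum_lt k (fun i => f i + g i) = sum_lt k f + sum_lt k g.
Proof. induction k; simpl; [lra|]. rewrite IHk. lra. Qed.

Lemma sum_lt_minus k f g : sum_lt k (fun i => f i - g i) = sum_lt k f - sum_lt k g.
Proof. induction k; simpl; [lra|]. rewrite IHk. lra. Qed.

Lemma sum_lt_scal k c f : sum_lt k (fun i => c * f i) = c * sum_lt k f.
Proof. induction k; simpl; [lra|]. rewrite IHk. lra. Qed.

Lemma sum_lt_zero k f : (forall i, (i < k)%nat -> f i = 0) -> sum_lt k f = 0.
Proof. induction k; simpl; intros H; auto. rewrite IHk by (intros; apply H; lia). rewrite H by lia. lra. Qed.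

Lemma sum_lt_le k f g : (forall i, (i < k)%nat -> f i <= g i) -> sum_lt k f <= sum_lt k g.
Proof. induction k; simpl; intros H; [lra|]. pose proof (IHk (fun i Hi => H i ltac:(lia))). pose proof (H k ltac:(lia)). lra. Qed.

Lemma sum_lt_nonneg k f : (forall i, (i < k)%nat -> 0 <= f i) -> 0 <= sum_lt k f.
Proof. intros H. replace 0 with (sum_lt k (fun _ => 0)). apply sum_lt_le; auto. apply sum_lt_zero; auto. Qed.

Lemma sum_lt_shift k f : sum_lt (S k) f = f 0%nat + sum_lt k (fun i => f (S i)).
Proof. induction k; simpl in *; [lra|]. rewrite IHk. lra. Qed.

Lemma sum_lt_term_le k f i : (forall j, (j < k)%nat -> 0 <= f j) -> (i < k)%nat -> f i <= sum_lt k f.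
Proof. induction k; simpl; intros H Hi; [lia|].
  destruct (Nat.eq_dec i k). subst. pose proof (sum_lt_nonneg k f (fun j Hj => H j ltac:(lia))). lra.
  pose proof (IHk (fun j Hj => H j ltac:(lia)) ltac:(lia)). pose proof (H k ltac:(lia)). lra. Qed.

Lemma sumR_ext m n f g : (forall i, (m <= i <= n)%nat -> f i = g i) -> sumR m n f = sumR m n g.
Proof. intros H. unfold sumR. apply sum_lt_ext. intros. apply H. lia. Qed.

Lemma sumR_plus m n f g : sumR m n (fun i => f i + g i) = sumR m n f + sumR m n g.
Proof. unfold sumR. apply sum_lt_plus. Qed.
Lemma sumR_minus m n f g : sumR m n (fun i => f i - g i) = sumR m n f - sumR m n g.
Proof. unfold sumR. apply sum_lt_minus. Qed.
Lemma sumR_scal m n c f : sumR m n (fun i => c * f i) = c * sumR m n f.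
Proof. unfold sumR. apply sum_lt_scal. Qed.
Lemma sumR_le m n f g : (forall i, (m <= i <= n)%nat -> f i <= g i) -> sumR m n f <= sumR m n g.
Proof. intros H. unfold sumR. apply sum_lt_le. intros. apply H. lia. Qed.
Lemma sumR_nonneg m n f : (forall i, (m <= i <= n)%nat -> 0 <= f i) -> 0 <= sumR m n f.
Proof. intros H. unfold sumR. apply sum_lt_nonneg. intros. apply H. lia. Qed.
Lemma sumR_zero m n f : (forall i, (m <= i <= n)%nat -> f i = 0) -> sumR m n f = 0.
Proof. intros H. unfold sumR. apply sum_lt_zero. intros. apply H. lia. Qed.

Lemma sumR_last m n f : (m <= S n)%nat -> sumR m (S n) f = sumR m n f + f (S n).
Proof. intros H. unfold sumR. replace (S (S n) - m)%nat with (S (S n - m)) by lia. cbn [sum_lt].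
  f_equal. f_equal. f_equal. lia. Qed.
Lemma sumR_first m n f : (m <= n)%nat -> sumR m n f = f m + sumR (S m) n f.
Proof. intros H. unfold sumR. replace (S n - m)%nat with (S (S n - S m)) by lia.
  rewrite sum_lt_shift. f_equal. f_equal. lia. apply sum_lt_ext. intros. f_equal. lia. Qed.
Lemma sumR_empty m n f : (n < m)%nat -> sumR m n f = 0.
Proof. intros H. unfold sumR. replace (S n - m)%nat with 0%nat by lia. reflexivity. Qed.
Lemma sumR_single m f : sumR m m f = f m.
Proof. unfold sumR. replace (S m - m)%nat with 1%nat by lia. simpl. rewrite Nat.add_0_r. lra. Qed.
Lemma sumR_shift m n f : sumR (S m) (S n) f = sumR m n (fun i => f (S i)).
Proof. unfold sumR. replace (S (S n) - S m)%nat with (S n - m)%nat by lia. apply sum_lt_ext. intros. f_equal. Qed.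
Lemma sumR_term_le m n f i : (forall j, (m <= j <= n)%nat -> 0 <= f j) -> (m <= i <= n)%nat -> f i <= sumR m n f.
Proof. intros H Hi. unfold sumR. replace (f i) with (f (m + (i - m))%nat) by (f_equal; lia).
  apply (sum_lt_term_le _ (fun k => f (m+k)%nat)). intros. apply H; lia. lia. Qed.

Lemma sumR_split m k n f : (m <= S k)%nat -> (k <= n)%nat ->
  sumR m n f = sumR m k f + sumR (S k) n f.
Proof. intros H1 H2. induction n.
  - assert (k = 0)%nat by lia. subst. rewrite (sumR_empty 1 0) by lia. lra.
  - destruct (Nat.eq_dec k (S n)). subst. rewrite (sumR_empty (S (S n))) by lia. lra.
    rewrite sumR_last by lia. rewrite IHn by lia. rewrite (sumR_last (S k)) by lia. lra. Qed.

Section X.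
Variable J : nat.
Variable x : nat -> R.
Hypothesis xinc : forall j, (j < J)%nat -> x j < x (S j).

Lemma xlt i j : (i < j)%nat -> (j <= J)%nat -> x i < x j.
Proof. intros H1 H2. induction j. lia. destruct (Nat.eq_dec i j). subst. apply xinc; lia.
  pose proof (IHj ltac:(lia) ltac:(lia)). pose proof (xinc j ltac:(lia)). lra. Qed.
Lemma xle i j : (i <= j)%nat -> (j <= J)%nat -> x i <= x j.
Proof. intros. destruct (Nat.eq_dec i j). subst; lra. left. apply xlt; lia. Qed.

Lemma hbar_rec_cases h y : forall m j, (j + m = J)%nat -> x j <= y ->
  (exists k, (j <= k < J)%nat /\ x k <= y <= x (S k) /\ hbar_rec J x h y j m = seg x h k y) \/
  (x J <= y /\ hbar_rec J x h y j m = h J + (y - x J) * h (S J)).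
Proof. induction m; intros j Hj Hy; simpl.
  - right. replace j with J in * by lia. auto.
  - destruct (Rle_dec y (x (S j))).
    + left. exists j. repeat split; auto; lia.
    + destruct (IHm (S j) ltac:(lia) ltac:(lra)) as [[k [Hk1 Hk2]]|Hr].
      left. exists k. split. lia. auto. right; auto. Qed.

Lemma hbar_cases h y : x 0%nat <= y ->
  (exists k, (k < J)%nat /\ x k <= y <= x (S k) /\ hbar J x h y = seg x h k y) \/
  (x J <= y /\ hbar J x h y = h J + (y - x J) * h (S J)).
Proof. intros Hy. destruct (hbar_rec_cases h y J 0 ltac:(lia) Hy) as [[k [Hk1 Hk2]]|Hr].
  left. exists k. split. lia. auto. right. auto. Qed.

Lemma hbar_rec_lin h1 h2 al be y : forall m j,
  hbar_rec J x (fun i => al * h1 i + be * h2 i) y j m =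
  al * hbar_rec J x h1 y j m + be * hbar_rec J x h2 y j m.
Proof. induction m; intros j; simpl. ring.
  destruct (Rle_dec y (x (S j))). unfold seg, Rdiv. ring. apply IHm. Qed.

Lemma hbar_lin h1 h2 al be y :
  hbar J x (fun i => al * h1 i + be * h2 i) y = al * hbar J x h1 y + be * hbar J x h2 y.
Proof. apply hbar_rec_lin. Qed.

Lemma hbar_sub h1 h2 y : hbar J x (fun i => h1 i - h2 i) y = hbar J x h1 y - hbar J x h2 y.
Proof. replace (fun i => h1 i - h2 i) with (fun i => 1 * h1 i + (-1) * h2 i)
  by (apply functional_extensionality; intros; ring). rewrite hbar_lin. ring. Qed.
Lemma hbar_add h1 h2 y : hbar J x (fun i => h1 i + h2 i) y = hbar J x h1 y + hbar J x h2 y.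
Proof. replace (fun i => h1 i + h2 i) with (fun i => 1 * h1 i + 1 * h2 i)
  by (apply functional_extensionality; intros; ring). rewrite hbar_lin. ring. Qed.

Lemma seg_node_l h k : (k < J)%nat -> seg x h k (x k) = h k.
Proof. intros. pose proof (xinc k H). unfold seg. field. lra. Qed.
Lemma seg_node_r h k : (k < J)%nat -> seg x h k (x (S k)) = h (S k).
Proof. intros. pose proof (xinc k H). unfold seg. field. lra. Qed.

Lemma hbar_node h k : (k <= J)%nat -> hbar J x h (x k) = h k.
Proof. intros Hk. assert (x 0%nat <= x k) by (apply xle; lia).
  destruct (hbar_cases h (x k) H) as [[m [Hm [Hm2 E]]]|[Hr E]]; rewrite E.
  - destruct (Nat.lt_trichotomy k m) as [Hl|[He|Hg]].
    + pose proof (xlt k m Hl ltac:(lia)). lra.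
    + subst. apply seg_node_l; auto.
    + destruct (Nat.eq_dec k (S m)). subst. apply seg_node_r; auto.
      pose proof (xlt (S m) k ltac:(lia) Hk). lra.
  - destruct (Nat.eq_dec k J). subst. ring. pose proof (xlt k J ltac:(lia) ltac:(lia)). lra. Qed.

Lemma hbar_zero h y : x 0%nat <= y -> (forall i, (i <= S J)%nat -> h i = 0) -> hbar J x h y = 0.
Proof. intros Hy H. destruct (hbar_cases h y Hy) as [[m [Hm [Hm2 E]]]|[Hr E]]; rewrite E.
  unfold seg. rewrite !H by lia. unfold Rdiv. ring. rewrite !H by lia. ring. Qed.

Lemma gamma_partial h y : forall k, (k <= J)%nat ->
  sumR 0 k (fun j => gamma J x h j * (y - x j)) = h k - h 0%nat + slope J x h k * (y - x k).
Proof. induction k; intros Hk.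
  - rewrite sumR_single. unfold gamma. simpl. ring.
  - rewrite sumR_last by lia. rewrite IHk by lia. unfold gamma, slope.
    replace (Nat.eqb (S k) 0) with false by reflexivity.
    replace (S k - 1)%nat with k by lia.
    assert (Hk' : Nat.ltb k J = true) by (apply Nat.ltb_lt; lia). rewrite Hk'.
    pose proof (xinc k ltac:(lia)).
    destruct (Nat.ltb (S k) J) eqn:E. apply Nat.ltb_lt in E. pose proof (xinc (S k) E).
    field; lra. field; lra. Qed.

Lemma hbar_decomp h y : x 0%nat <= y ->
  hbar J x h y = h 0%nat + sumR 0 J (fun j => gamma J x h j * Rmax (y - x j) 0).
Proof. intros Hy. destruct (hbar_cases h y Hy) as [[k [Hk [Hk2 E]]]|[Hr E]]; rewrite E.
  - rewrite (sumR_split 0 k J) by lia.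
    rewrite (sumR_zero (S k) J).
    2:{ intros i Hi. assert (x (S k) <= x i) by (apply xle; lia). rewrite Rmax_right by lra. ring. }
    rewrite (sumR_ext 0 k _ (fun j => gamma J x h j * (y - x j))).
    2:{ intros i Hi. assert (x i <= x k) by (apply xle; lia). rewrite Rmax_left by lra. ring. }
    rewrite gamma_partial by lia. unfold slope.
    assert (Hk' : Nat.ltb k J = true) by (apply Nat.ltb_lt; lia). rewrite Hk'.
    pose proof (xinc k Hk). unfold seg. field. lra.
  - rewrite (sumR_ext 0 J _ (fun j => gamma J x h j * (y - x j))).
    2:{ intros i Hi. assert (x i <= x J) by (apply xle; lia). rewrite Rmax_left by lra. ring. }
    rewrite gamma_partial by lia. unfold slope. rewrite Nat.ltb_irrefl. ring. Qed.

End X.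

Section S.
Variable J : nat.
Variable x : nat -> R.
Hypothesis xinc : forall j, (j < J)%nat -> x j < x (S j).

Lemma mix_rec_cases d u tail y : forall m j, (j + m = J)%nat -> x j <= y ->
  (exists i, (j <= i <= J)%nat /\ y = x i /\ mix_rec x d u tail y j m = d i) \/
  (exists k, (j <= k < J)%nat /\ x k < y < x (S k) /\ mix_rec x d u tail y j m = mix_inner x d u k) \/
  (x J < y /\ mix_rec x d u tail y j m = tail).
Proof. induction m; intros j Hj Hy; simpl.
  - replace j with J in * by lia. destruct (Rle_dec y (x J)).
    left. exists J. repeat split; auto; lra. right; right. split; auto; lra.
  - destruct (Rle_dec y (x j)). left. exists j. repeat split; auto; lia || lra.
    destruct (Rlt_dec y (x (S j))).
    + right; left. exists j. repeat split; auto; try lia; lra.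
    + destruct (IHm (S j) ltac:(lia) ltac:(lra)) as [[i [Hi1 Hi2]]|[[k [Hk1 Hk2]]|Hr]].
      left. exists i. split. lia. auto. right; left. exists k. split. lia. auto. right; right; auto. Qed.

Lemma mix_cases d u tail y : x 0%nat <= y ->
  (exists i, (i <= J)%nat /\ y = x i /\ mixinterp J x d u tail y = d i) \/
  (exists k, (k < J)%nat /\ x k < y < x (S k) /\ mixinterp J x d u tail y = mix_inner x d u k) \/
  (x J < y /\ mixinterp J x d u tail y = tail).
Proof. intros Hy. destruct (mix_rec_cases d u tail y J 0 ltac:(lia) Hy) as [[i [Hi1 Hi2]]|[[k [Hk1 Hk2]]|Hr]].
  left. exists i. split. lia. auto. right; left. exists k. split. lia. auto. right; right; auto. Qed.

Lemma super_lemma E1 E2 D y y' :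
  (forall j k, (j <= J)%nat -> (k <= J)%nat -> 0 <= E1 j + E2 k + (x k - x j) * D j) ->
  (forall j, (j <= J)%nat -> 0 <= E2 (S J) + D j) ->
  0 <= E1 (S J) + E2 (S J) ->
  x 0%nat <= y -> x 0%nat <= y' ->
  0 <= hbar J x E1 y + hbar J x E2 y' +
       mixinterp J x D (fun j => (E1 (S j) - E1 j) / (x (S j) - x j)) (Rmin (D J) (E1 (S J))) y * (y' - y).
Proof.
  intros H1 H2 H3 Hy Hy'.
  set (dl := mixinterp J x D (fun j => (E1 (S j) - E1 j) / (x (S j) - x j)) (Rmin (D J) (E1 (S J))) y).
  set (H0 := hbar J x E1 y).
  assert (HAB : (forall k, (k <= J)%nat -> 0 <= H0 + E2 k + dl * (x k - y)) /\ 0 <= E2 (S J) + dl).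
  { destruct (mix_cases D (fun j => (E1 (S j) - E1 j) / (x (S j) - x j)) (Rmin (D J) (E1 (S J))) y Hy)
      as [[i [Hi [Hyi E]]]|[[m [Hm [Hym E]]]|[HyJ E]]]; unfold dl; rewrite E; unfold H0.
    - subst y. rewrite hbar_node by auto. split; auto. intros k Hk. specialize (H1 i k Hi Hk). lra.
    - assert (Hseg : hbar J x E1 y = seg x E1 m y).
      { destruct (hbar_cases J x E1 y Hy) as [[k' [Hk' [Hk2 E']]]|[Hr E']].
        - destruct (Nat.lt_trichotomy k' m) as [Hl|[He|Hg]].
          + pose proof (xle J x xinc (S k') m ltac:(lia) ltac:(lia)). lra.
          + subst; auto.
          + pose proof (xle J x xinc (S m) k' ltac:(lia) ltac:(lia)). lra.
        - pose proof (xle J x xinc (S m) J ltac:(lia) ltac:(lia)). lra. }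
      rewrite Hseg. pose proof (xinc m Hm) as Hx.
      set (u := (E1 (S m) - E1 m) / (x (S m) - x m)).
      assert (Hu : E1 (S m) = E1 m + u * (x (S m) - x m)) by (unfold u; field; lra).
      assert (Hs : seg x E1 m y = E1 m + u * (y - x m)) by (unfold seg; rewrite Hu; field; lra).
      rewrite Hs. unfold mix_inner. fold u.
      destruct (Rle_dec (D m) u).
      + split. intros k Hk. specialize (H1 m k ltac:(lia) Hk).
        assert (0 <= (u - D m) * (y - x m)) by (apply Rmult_le_pos; lra). nra.
        apply H2; lia.
      + destruct (Rle_dec u (D (S m))).
        * split. intros k Hk. specialize (H1 (S m) k ltac:(lia) Hk).
          assert (0 <= (D (S m) - u) * (x (S m) - y)) by (apply Rmult_le_pos; lra). nra.
          apply H2; lia.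
        * split. intros k Hk. destruct (Compare_dec.le_lt_dec k m).
          -- specialize (H1 m k ltac:(lia) Hk). pose proof (xle J x xinc k m l ltac:(lia)).
             assert (0 <= (D m - u) * (x m - x k)) by (apply Rmult_le_pos; lra). nra.
          -- specialize (H1 (S m) k ltac:(lia) Hk). pose proof (xle J x xinc (S m) k ltac:(lia) Hk).
             assert (0 <= (u - D (S m)) * (x k - x (S m))) by (apply Rmult_le_pos; lra). nra.
          -- specialize (H2 (S m) ltac:(lia)). lra.
    - assert (Ht : hbar J x E1 y = E1 J + (y - x J) * E1 (S J)).
      { destruct (hbar_cases J x E1 y Hy) as [[k' [Hk' [Hk2 E']]]|[Hr E']]; auto.
        pose proof (xle J x xinc (S k') J ltac:(lia) ltac:(lia)). lra. }
      rewrite Ht. split.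
      + intros k Hk. specialize (H1 J k ltac:(lia) Hk). pose proof (xle J x xinc k J Hk ltac:(lia)).
        assert (Hm1 : Rmin (D J) (E1 (S J)) <= D J) by apply Rmin_l.
        assert (Hm2 : Rmin (D J) (E1 (S J)) <= E1 (S J)) by apply Rmin_r.
        assert (0 <= (D J - Rmin (D J) (E1 (S J))) * (x J - x k)) by (apply Rmult_le_pos; lra).
        assert (0 <= (E1 (S J) - Rmin (D J) (E1 (S J))) * (y - x J)) by (apply Rmult_le_pos; lra).
        nra.
      + unfold Rmin. destruct (Rle_dec (D J) (E1 (S J))). apply H2; lia. lra. }
  destruct HAB as [HA HB].
  destruct (hbar_cases J x E2 y' Hy') as [[k [Hk [Hk2 E]]]|[Hr E]]; rewrite E.
  - pose proof (xinc k Hk). pose proof (HA k ltac:(lia)). pose proof (HA (S k) ltac:(lia)).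
    assert (Heq : H0 + seg x E2 k y' + dl * (y' - y) =
       ((x (S k) - y') * (H0 + E2 k + dl * (x k - y)) + (y' - x k) * (H0 + E2 (S k) + dl * (x (S k) - y))) / (x (S k) - x k))
      by (unfold seg; field; lra).
    rewrite Heq. apply Rmult_le_pos. 2:{ left. apply Rinv_0_lt_compat. lra. }
    assert (0 <= (x (S k) - y') * (H0 + E2 k + dl * (x k - y))) by (apply Rmult_le_pos; lra).
    assert (0 <= (y' - x k) * (H0 + E2 (S k) + dl * (x (S k) - y))) by (apply Rmult_le_pos; lra). lra.
  - pose proof (HA J ltac:(lia)).
    assert (0 <= (E2 (S J) + dl) * (y' - x J)) by (apply Rmult_le_pos; lra). nra.
Qed.
End S.

Lemma conv_tail (A : R -> R) (l : R) :
  (forall y z lam, 0 <= y -> 0 <= z -> 0 <= lam <= 1 ->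
       A (lam * y + (1 - lam) * z) <= lam * A y + (1 - lam) * A z) ->
  (forall eps, 0 < eps -> exists M, forall y, M < y -> Rabs (A y / y - l) < eps) ->
  forall p y, 0 <= p -> p <= y -> A y <= A p + l * (y - p).
Proof.
  intros Hc Hl p y Hp Hpy. destruct (Rle_dec (A y) (A p + l * (y - p))) as [|Hn]; auto. exfalso.
  assert (Hyp : p < y). { destruct (Req_dec p y). subst. lra. lra. }
  set (s := (A y - A p) / (y - p)).
  assert (Hs : A y - A p = s * (y - p)) by (unfold s; field; lra).
  assert (Hsl : l < s). { apply Rnot_le_lt in Hn. assert (l * (y - p) < s * (y - p)) by lra.
     apply Rmult_lt_reg_r with (y - p); lra. }
  set (eps := (s - l) / 2). assert (He : 0 < eps) by (unfold eps; lra).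
  destruct (Hl eps He) as [M HM].
  set (w := Rmax M y + 1 + Rabs (A p - s * p) / eps).
  assert (Hw1 : M < w). { unfold w. pose proof (Rmax_l M y). pose proof (Rabs_pos (A p - s * p)).
    assert (0 <= Rabs (A p - s * p) / eps) by (apply Rmult_le_pos; [auto| left; apply Rinv_0_lt_compat; auto]). lra. }
  assert (Hw2 : y < w). { unfold w. pose proof (Rmax_r M y). pose proof (Rabs_pos (A p - s * p)).
    assert (0 <= Rabs (A p - s * p) / eps) by (apply Rmult_le_pos; [auto| left; apply Rinv_0_lt_compat; auto]). lra. }
  assert (Hw3 : Rabs (A p - s * p) < eps * w).
  { unfold w. assert (Rabs (A p - s * p) = eps * (Rabs (A p - s * p) / eps)) by (field; lra).
    pose proof (Rmax_r M y). nra. }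
  (* convexity: A w >= A p + s (w - p) *)
  set (lam := (w - y) / (w - p)).
  assert (Hlam : 0 <= lam <= 1). { unfold lam. split. apply Rmult_le_pos. lra. left. apply Rinv_0_lt_compat. lra.
    apply Rmult_le_reg_r with (w - p). lra. field_simplify; lra. }
  pose proof (Hc p w lam Hp ltac:(lra) Hlam) as Hcv.
  replace (lam * p + (1 - lam) * w) with y in Hcv by (unfold lam; field; lra).
  assert (H1l : 1 - lam = (y - p) / (w - p)) by (unfold lam; field; lra).
  rewrite H1l in Hcv.
  assert (Hkey : A y - A p <= (y - p) / (w - p) * (A w - A p)).
  { replace lam with (1 - (y - p) / (w - p)) in Hcv by lra. nra. }
  rewrite Hs in Hkey.
  assert (Hkey2 : s * (w - p) <= A w - A p).
  { assert (Hq : (y - p) / (w - p) * (A w - A p) = (y - p) * ((A w - A p) / (w - p))) by (field; lra).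
    rewrite Hq in Hkey. assert (s <= (A w - A p) / (w - p)).
    { apply Rmult_le_reg_l with (y - p). lra. lra. }
    assert ((A w - A p) / (w - p) * (w - p) = A w - A p) by (field; lra). nra. }
  specialize (HM w Hw1).
  assert (Hwp : 0 < w) by lra.
  assert (HAw : A w < (l + eps) * w).
  { apply Rabs_def2 in HM. destruct HM as [HM1 HM2].
    assert (A w / w < l + eps) by lra.
    assert (A w = A w / w * w) by (field; lra). nra. }
  pose proof (Rle_abs (- (A p - s * p))). rewrite Rabs_Ropp in H.
  assert (s - l - eps = eps) by (unfold eps; field). nra.
Qed.

Lemma vbar_ge_a J x (A : R -> R) (l : R) (v : nat -> R) y :
  (forall j, (j < J)%nat -> x j < x (S j)) -> x 0%nat = 0 ->
  (forall y z lam, 0 <= y -> 0 <= z -> 0 <= lam <= 1 ->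
       A (lam * y + (1 - lam) * z) <= lam * A y + (1 - lam) * A z) ->
  (forall eps, 0 < eps -> exists M, forall y, M < y -> Rabs (A y / y - l) < eps) ->
  (forall j, (j <= J)%nat -> A (x j) <= v j) -> l <= v (S J) ->
  0 <= y -> A y <= hbar J x v y.
Proof.
  intros xinc x0 Hc Hl Hv HvJ Hy.
  assert (Hy0 : x 0%nat <= y) by lra.
  destruct (hbar_cases J x v y Hy0) as [[k [Hk [Hk2 E]]]|[Hr E]]; rewrite E.
  - pose proof (xinc k Hk). assert (0 <= x k) by (rewrite <- x0; apply (xle J x xinc); lia).
    set (lam := (x (S k) - y) / (x (S k) - x k)).
    assert (Hlam : 0 <= lam <= 1). { unfold lam. split. apply Rmult_le_pos. lra. left. apply Rinv_0_lt_compat. lra.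
      apply Rmult_le_reg_r with (x (S k) - x k). lra. field_simplify; lra. }
    pose proof (Hc (x k) (x (S k)) lam ltac:(lra) ltac:(lra) Hlam) as Hcv.
    replace (lam * x k + (1 - lam) * x (S k)) with y in Hcv by (unfold lam; field; lra).
    assert (Hseg : seg x v k y = lam * v k + (1 - lam) * v (S k)) by (unfold seg, lam; field; lra).
    rewrite Hseg. pose proof (Hv k ltac:(lia)). pose proof (Hv (S k) ltac:(lia)).
    assert (lam * A (x k) <= lam * v k) by (apply Rmult_le_compat_l; lra).
    assert ((1 - lam) * A (x (S k)) <= (1 - lam) * v (S k)) by (apply Rmult_le_compat_l; lra). lra.
  - assert (0 <= x J) by (rewrite <- x0; apply (xle J x xinc); lia).
    pose proof (conv_tail A l Hc Hl (x J) y H Hr). pose proof (Hv J ltac:(lia)).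
    assert (l * (y - x J) <= (y - x J) * v (S J)) by nra. lra.
Qed.

Lemma abel K h D : (1 <= K)%nat ->
  sum_lt K (fun j => (h (S j) - h j) * D j) =
  - h 0%nat * D 0%nat + sumR 1 (K - 1) (fun j => h j * (D (j - 1)%nat - D j)) + h K * D (K - 1)%nat.
Proof. intros HK. revert HK. induction K as [|K IH]; intros HK. lia.
  destruct (Nat.eq_dec K 0). subst. simpl. rewrite sumR_empty by lia. ring.
  cbn [sum_lt]. rewrite IH by lia. replace (S K - 1)%nat with K by lia.
  destruct K. lia. replace (S K - 1)%nat with K by lia.
  rewrite (sumR_last 1 K) by lia. replace (S K - 1)%nat with K by lia. ring. Qed.

Section C.
Variables (J : nat) (s0 : R) (x : nat -> R) (c : nat -> nat -> R) (n : nat).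
Hypothesis xinc : forall j, (j < J)%nat -> x j < x (S j).
Hypothesis x0 : x 0%nat = 0.
Hypothesis c0 : c 0%nat n = s0.
Hypothesis J1 : (1 <= J)%nat.

Let D j := (c j n - c (S j) n) / (x (S j) - x j).

Lemma gamma_c_partial h : forall k, (k <= J)%nat ->
  sumR 0 k (fun j => gamma J x h j * c j n) =
  sum_lt k (fun j => slope J x h j * (c j n - c (S j) n)) + slope J x h k * c k n.
Proof. induction k; intros Hk.
  - rewrite sumR_single. unfold gamma. simpl. ring.
  - rewrite sumR_last by lia. rewrite IHk by lia. unfold gamma.
    replace (Nat.eqb (S k) 0) with false by reflexivity.
    replace (S k - 1)%nat with k by lia. cbn [sum_lt]. ring. Qed.

Lemma cost_identity h :
  sumR 0 (S J) (fun j => h j * phat J s0 x c j n) =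
  h 0%nat + sumR 0 J (fun j => gamma J x h j * c j n).
Proof.
  rewrite gamma_c_partial by lia.
  rewrite (sum_lt_ext J _ (fun j => (h (S j) - h j) * D j)).
  2:{ intros i Hi. unfold slope, D. assert (Nat.ltb i J = true) by (apply Nat.ltb_lt; auto). rewrite H.
      pose proof (xinc i Hi). field. lra. }
  rewrite abel by lia.
  unfold slope. rewrite Nat.ltb_irrefl.
  rewrite sumR_last by lia. rewrite sumR_first by lia.
  replace J with (S (J - 1)) at 2 by lia. rewrite sumR_last by lia. replace (S (J - 1)) with J by lia.
  rewrite (sumR_ext 1 (J - 1) _ (fun j => h j * (D (j - 1)%nat - D j))).
  2:{ intros i Hi. unfold phat, D. destruct i. lia.
      replace (Nat.eqb (S i) 0) with false by reflexivity.
      assert (Nat.ltb (S i) J = true) by (apply Nat.ltb_lt; lia). rewrite H.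
      replace (S i - 1)%nat with i by lia. reflexivity. }
  assert (PJ : phat J s0 x c J n = D (J - 1)%nat).
  { unfold phat, D. rewrite (proj2 (Nat.eqb_neq J 0)) by lia. rewrite Nat.ltb_irrefl, Nat.eqb_refl.
    replace (S (J - 1)) with J by lia. reflexivity. }
  assert (PSJ : phat J s0 x c (S J) n = c J n).
  { unfold phat. rewrite (proj2 (Nat.eqb_neq (S J) 0)) by lia.
    rewrite (proj2 (Nat.ltb_ge (S J) J)) by lia. rewrite (proj2 (Nat.eqb_neq (S J) J)) by lia.
    rewrite Nat.eqb_refl. reflexivity. }
  assert (P0 : phat J s0 x c 0 n = 1 - D 0%nat).
  { unfold phat, D. simpl. rewrite c0, x0. f_equal. f_equal. ring. }
  rewrite PJ, PSJ, P0. ring.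
Qed.
End C.

Lemma mix_bound J x d u tail y : (forall j, (j < J)%nat -> x j < x (S j)) -> x 0%nat <= y ->
  Rabs (mixinterp J x d u tail y) <= sumR 0 J (fun j => Rabs (d j) + Rabs (u j)) + Rabs tail.
Proof. intros xinc Hy.
  assert (Hpos : forall j, (0 <= j <= J)%nat -> 0 <= Rabs (d j) + Rabs (u j)).
  { intros. pose proof (Rabs_pos (d j)). pose proof (Rabs_pos (u j)). lra. }
  assert (Ht : forall i, (i <= J)%nat -> Rabs (d i) <= sumR 0 J (fun j => Rabs (d j) + Rabs (u j)) + Rabs tail).
  { intros i Hi. pose proof (sumR_term_le 0 J _ i Hpos ltac:(lia)). simpl in H. pose proof (Rabs_pos (u i)).
    pose proof (Rabs_pos tail). lra. }
  assert (Hu : forall i, (i <= J)%nat -> Rabs (u i) <= sumR 0 J (fun j => Rabs (d j) + Rabs (u j)) + Rabs tail).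
  { intros i Hi. pose proof (sumR_term_le 0 J _ i Hpos ltac:(lia)). simpl in H. pose proof (Rabs_pos (d i)).
    pose proof (Rabs_pos tail). lra. }
  destruct (mix_cases J x d u tail y Hy) as [[i [Hi [Hyi E]]]|[[k [Hk [Hyk E]]]|[HyJ E]]]; rewrite E.
  - apply Ht; auto.
  - unfold mix_inner. destruct (Rle_dec (d k) (u k)). apply Ht; lia. destruct (Rle_dec (u k) (d (S k))).
    apply Ht; lia. apply Hu; lia.
  - pose proof (sumR_nonneg 0 J _ Hpos). lra.
Qed.

Lemma telescope (V b : nat -> R) rho : forall K, (1 <= rho <= S K)%nat ->
  (forall n, b n = if Nat.ltb n rho then 0 else V n - V (S n)) ->
  sum_lt K (fun i => b (S i)) = V rho - V (S K).
Proof. intros K. induction K; intros Hr Hb.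
  - simpl. replace rho with 1%nat by lia. ring.
  - cbn [sum_lt]. destruct (Nat.eq_dec rho (S (S K))).
    + subst. rewrite sum_lt_zero. rewrite Hb. replace (Nat.ltb (S K) (S (S K))) with true by (symmetry; apply Nat.ltb_lt; lia). ring.
      intros i Hi. rewrite Hb. replace (Nat.ltb (S i) (S (S K))) with true by (symmetry; apply Nat.ltb_lt; lia). auto.
    + rewrite IHK by (auto; lia). rewrite Hb. replace (Nat.ltb (S K) rho) with false by (symmetry; apply Nat.ltb_ge; lia). ring.
Qed.

Lemma ifsum m n N f : (1 <= N)%nat -> (m <= N <= n)%nat -> sumR m n (fun k => if Nat.eqb k N then f else 0) = f.
Proof. intros H0 H. rewrite (sumR_split m (N - 1) n) by lia.
  rewrite sumR_zero. 2:{ intros i Hi. rewrite (proj2 (Nat.eqb_neq i N)) by lia. auto. }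
  rewrite sumR_first by lia. replace (S (N - 1)) with N by lia. rewrite Nat.eqb_refl.
  rewrite sumR_zero. ring. intros i Hi. rewrite (proj2 (Nat.eqb_neq i N)) by lia. auto. Qed.

Section Main2.
Variables (N J : nat) (t : nat -> R) (s0 : R) (x : nat -> R) (c : nat -> nat -> R) (a : R -> R -> R) (l : nat -> R).
Hypothesis HM : market_assumptions N J t s0 x c.
Hypothesis HP : payoff_assumptions N t a l.

Lemma mfacts : (1 <= N)%nat /\ (1 <= J)%nat /\ x 0%nat = 0 /\ (forall j, (j < J)%nat -> x j < x (S j)) /\
  (forall n, (1 <= n <= N)%nat -> c 0%nat n = s0).
Proof. destruct HM as [HN [HJ [Ht0 [Htinc [Hs0 [Hx0 [Hxinc [Hc Hcinc]]]]]]]].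
  repeat split; auto. intros n Hn. apply (Hc n Hn). Qed.

Lemma cost_eq z : cost N J c (lp_strategy N J x z) = lp_objective N J s0 x c z.
Proof.
  destruct mfacts as [HN [HJ [Hx0 [Hxinc Hc0]]]].
  unfold cost, lp_strategy, lp_objective. cbn [bond calls].
  rewrite (sumR_ext 1 N (fun n => sumR 0 J (fun j => (gamma J x (fun i => e1 z i n) j + gamma J x (fun i => e2 z i n) j + (if Nat.eqb n N then gamma J x (fun i => v z i N) j else 0)) * c j n)) (fun n => (sumR 0 (S J) (fun j => e1 z j n * phat J s0 x c j n) - e1 z 0%nat n)
     + (sumR 0 (S J) (fun j => e2 z j n * phat J s0 x c j n) - e2 z 0%nat n)
     + (if Nat.eqb n N then sumR 0 (S J) (fun j => v z j N * phat J s0 x c j N) - v z 0%nat N else 0))).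
  2:{ intros n Hn. rewrite !(cost_identity J s0 x c n Hxinc Hx0 (Hc0 n Hn) HJ).
      destruct (Nat.eqb n N) eqn:E.
      - apply Nat.eqb_eq in E. subst. rewrite (cost_identity J s0 x c N Hxinc Hx0 (Hc0 N Hn) HJ).
        rewrite (sumR_ext 0 J _ (fun j => gamma J x (fun i => e1 z i N) j * c j N + gamma J x (fun i => e2 z i N) j * c j N + gamma J x (fun i => v z i N) j * c j N)) by (intros; ring).
        rewrite !sumR_plus. ring.
      - rewrite (sumR_ext 0 J (fun j => (gamma J x (fun i => e1 z i n) j + gamma J x (fun i => e2 z i n) j + 0) * c j n)
           (fun j => gamma J x (fun i => e1 z i n) j * c j n + gamma J x (fun i => e2 z i n) j * c j n)) by (intros; ring).
        rewrite sumR_plus. ring. }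
  rewrite !sumR_plus. rewrite ifsum by lia.
  rewrite (sumR_ext 1 N (fun n => sumR 0 (S J) (fun j => (e1 z j n + e2 z j n) * phat J s0 x c j n))
     (fun n => sumR 0 (S J) (fun j => e1 z j n * phat J s0 x c j n) + sumR 0 (S J) (fun j => e2 z j n * phat J s0 x c j n))).
  2:{ intros. rewrite <- sumR_plus. apply sumR_ext. intros; ring. }
  rewrite !sumR_minus, sumR_plus. ring.
Qed.

Lemma T_bound z X n rho : lp_feasible N J t x a l z -> nonneg_path N X -> (1 <= n <= N - 1)%nat ->
  (if Nat.ltb n rho then 0 else hbar J x (fun i => v z i n) (X n) - hbar J x (fun i => v z i (S n)) (X (S n)))
  <= hbar J x (fun i => e1 z i n) (X n) + hbar J x (fun i => e2 z i (S n)) (X (S n))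
     + delta (lp_strategy N J x z) n X rho * (X (S n) - X n).
Proof.
  destruct mfacts as [HN [HJ [Hx0 [Hxinc Hc0]]]].
  intros [Hb [Hvpos [Hi [Hii Hiii]]]] HX Hn. cbn [delta lp_strategy].
  assert (Hy : x 0%nat <= X n) by (rewrite Hx0; apply HX; lia).
  assert (Hy' : x 0%nat <= X (S n)) by (rewrite Hx0; apply HX; lia).
  destruct (Nat.ltb n rho).
  - destruct (Hii n Hn) as [A1 [A2 [A3 A4]]].
    pose proof (super_lemma J x Hxinc (fun j => e1 z j n) (fun j => e2 z j (S n)) (fun j => Defs.d1 z j n) (X n) (X (S n)) A1 A3 A4 Hy Hy').
    unfold dtilde1, u1. exact H.
  - destruct (Hiii n Hn) as [A1 [A2 [A3 A4]]].
    pose proof (super_lemma J x Hxinc (fun j => e1 z j n - v z j n) (fun j => e2 z j (S n) + v z j (S n)) (fun j => Defs.d2 z j n) (X n) (X (S n))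
      ltac:(intros j k Hj Hk; specialize (A1 j k Hj Hk); lra) ltac:(intros j Hj; specialize (A3 j Hj); lra) ltac:(lra) Hy Hy').
    rewrite hbar_sub, hbar_add in H. unfold dtilde2, u2. lra.
Qed.

Lemma payoff_ge z X rho : lp_feasible N J t x a l z -> nonneg_path N X -> (1 <= rho <= N)%nat ->
  a (X rho) (t rho) <= strat_payoff N J x (lp_strategy N J x z) X rho.
Proof.
  destruct mfacts as [HN [HJ [Hx0 [Hxinc Hc0]]]].
  intros Hf HX Hr. pose proof Hf as [Hb [Hvpos [Hi [Hii Hiii]]]].
  unfold strat_payoff. cbn [bond calls lp_strategy].
  rewrite (sumR_ext 1 N (fun n => sumR 0 J (fun j => (gamma J x (fun i => e1 z i n) j + gamma J x (fun i => e2 z i n) j + (if Nat.eqb n N then gamma J x (fun i => v z i N) j else 0)) * Rmax (X n - x j) 0))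
    (fun n => (hbar J x (fun i => e1 z i n) (X n) - e1 z 0%nat n) + (hbar J x (fun i => e2 z i n) (X n) - e2 z 0%nat n)
      + (if Nat.eqb n N then hbar J x (fun i => v z i N) (X N) - v z 0%nat N else 0))).
  2:{ intros n Hn. assert (Hy : x 0%nat <= X n) by (rewrite Hx0; apply HX; lia).
      rewrite !(hbar_decomp J x Hxinc _ (X n) Hy). destruct (Nat.eqb n N) eqn:E.
      - apply Nat.eqb_eq in E. subst. rewrite !(hbar_decomp J x Hxinc _ (X N) Hy).
        rewrite (sumR_ext 0 J _ (fun j => gamma J x (fun i => e1 z i N) j * Rmax (X N - x j) 0 + gamma J x (fun i => e2 z i N) j * Rmax (X N - x j) 0 + gamma J x (fun i => v z i N) j * Rmax (X N - x j) 0)) by (intros; ring).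
        rewrite !sumR_plus. ring.
      - rewrite (sumR_ext 0 J _ (fun j => gamma J x (fun i => e1 z i n) j * Rmax (X n - x j) 0 + gamma J x (fun i => e2 z i n) j * Rmax (X n - x j) 0)) by (intros; ring).
        rewrite !sumR_plus. ring. }
  rewrite !sumR_plus, !sumR_minus. rewrite ifsum by lia.
  assert (Le1 : sumR 1 N (fun n => hbar J x (fun i => e1 z i n) (X n)) = sumR 1 (N - 1) (fun n => hbar J x (fun i => e1 z i n) (X n))).
  { destruct N as [|N']. lia. rewrite sumR_last by lia. replace (S N' - 1)%nat with N' by lia.
    rewrite (hbar_zero J x). ring. rewrite Hx0; apply HX; lia. intros i Hi0. apply (Hb i Hi0). }
  assert (Le2 : sumR 1 N (fun n => hbar J x (fun i => e2 z i n) (X n)) = sumR 1 (N - 1) (fun n => hbar J x (fun i => e2 z i (S n)) (X (S n)))).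
  { destruct N as [|N']. lia. rewrite sumR_first by lia. replace (S N' - 1)%nat with N' by lia.
    rewrite (hbar_zero J x). rewrite sumR_shift. ring. rewrite Hx0; apply HX; lia. intros i Hi0. apply (Hb i Hi0). }
  rewrite Le1, Le2.
  set (V := fun n => hbar J x (fun i => v z i n) (X n)).
  set (b := fun n => if Nat.ltb n rho then 0 else V n - V (S n)).
  assert (Hsum : sumR 1 (N - 1) b = V rho - V N).
  { unfold sumR. replace (S (N - 1) - 1)%nat with (N - 1)%nat by lia.
    rewrite (sum_lt_ext _ _ (fun i => b (S i))) by (intros; reflexivity).
    rewrite (telescope V b rho (N - 1)) by (auto; lia). f_equal. f_equal. lia. }
  assert (Hle : sumR 1 (N - 1) b <= sumR 1 (N - 1) (fun n => hbar J x (fun i => e1 z i n) (X n) + hbar J x (fun i => e2 z i (S n)) (X (S n))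
     + delta (lp_strategy N J x z) n X rho * (X (S n) - X n))).
  { apply sumR_le. intros n Hn. unfold b, V. apply T_bound; auto. }
  rewrite !sumR_plus in Hle.
  assert (HVa : a (X rho) (t rho) <= V rho).
  { destruct (HP rho Hr) as [Pa [Pb Pc]]. destruct (Hi rho Hr) as [Hv1 Hv2].
    unfold V. apply (vbar_ge_a J x (fun y => a y (t rho)) (l rho)); auto. }
  cbn [delta lp_strategy] in Hle |- *.
  unfold V in *. lra.
Qed.
End Main2.

Section Main3.
Variables (N J : nat) (t : nat -> R) (s0 : R) (x : nat -> R) (c : nat -> nat -> R) (a : R -> R -> R) (l : nat -> R).
Hypothesis HM : market_assumptions N J t s0 x c.
Hypothesis HP : payoff_assumptions N t a l.

Lemma in_SSS_lp z : lp_feasible N J t x a l z -> in_SSS N J t x a (lp_strategy N J x z).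
Proof.
  destruct (mfacts N J t s0 x c HM) as [HN [HJ [Hx0 [Hxinc Hc0]]]].
  intros Hf. unfold in_SSS. split; [|split; [|split]].
  - intros n X Y rho Hn HXY. cbn [delta lp_strategy]. rewrite (HXY n) by lia. reflexivity.
  - intros n X rho rho' Hn Hr Hr' H1 H2. cbn [delta lp_strategy].
    destruct (Nat.ltb n rho) eqn:E1.
    + apply Nat.ltb_lt in E1. rewrite (proj2 (Nat.ltb_lt n rho')) by auto. reflexivity.
    + apply Nat.ltb_ge in E1. rewrite (H1 E1). rewrite (proj2 (Nat.ltb_ge n rho)) by auto. reflexivity.
  - set (Bn := fun n => (sumR 0 J (fun j => Rabs (Defs.d1 z j n) + Rabs (u1 x z n j)) + Rabs (Rmin (Defs.d1 z J n) (e1 z (S J) n)))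
        + (sumR 0 J (fun j => Rabs (Defs.d2 z j n) + Rabs (u2 x z n j)) + Rabs (Rmin (Defs.d2 z J n) (e1 z (S J) n - v z (S J) n)))).
    assert (HBp : forall n, 0 <= Bn n).
    { intros n. unfold Bn.
      assert (0 <= sumR 0 J (fun j => Rabs (Defs.d1 z j n) + Rabs (u1 x z n j))) by
        (apply sumR_nonneg; intros; pose proof (Rabs_pos (Defs.d1 z i n)); pose proof (Rabs_pos (u1 x z n i)); lra).
      assert (0 <= sumR 0 J (fun j => Rabs (Defs.d2 z j n) + Rabs (u2 x z n j))) by
        (apply sumR_nonneg; intros; pose proof (Rabs_pos (Defs.d2 z i n)); pose proof (Rabs_pos (u2 x z n i)); lra).
      pose proof (Rabs_pos (Rmin (Defs.d1 z J n) (e1 z (S J) n))).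
      pose proof (Rabs_pos (Rmin (Defs.d2 z J n) (e1 z (S J) n - v z (S J) n))). lra. }
    exists (sumR 1 (N - 1) Bn). intros n X rho Hn HX Hr.
    assert (Hy : x 0%nat <= X n) by (rewrite Hx0; apply HX; lia).
    pose proof (sumR_term_le 1 (N - 1) Bn n (fun j _ => HBp j) Hn).
    cbn [delta lp_strategy]. destruct (Nat.ltb n rho).
    + unfold dtilde1. pose proof (mix_bound J x (fun j => Defs.d1 z j n) (u1 x z n) (Rmin (Defs.d1 z J n) (e1 z (S J) n)) (X n) Hxinc Hy).
      change (Bn n) with ((sumR 0 J (fun j => Rabs (Defs.d1 z j n) + Rabs (u1 x z n j)) + Rabs (Rmin (Defs.d1 z J n) (e1 z (S J) n)))
        + (sumR 0 J (fun j => Rabs (Defs.d2 z j n) + Rabs (u2 x z n j)) + Rabs (Rmin (Defs.d2 z J n) (e1 z (S J) n - v z (S J) n)))) in H. pose proof (Rabs_pos (Rmin (Defs.d2 z J n) (e1 z (S J) n - v z (S J) n))).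
      assert (0 <= sumR 0 J (fun j => Rabs (Defs.d2 z j n) + Rabs (u2 x z n j))) by
        (apply sumR_nonneg; intros; pose proof (Rabs_pos (Defs.d2 z i n)); pose proof (Rabs_pos (u2 x z n i)); lra).
      lra.
    + unfold dtilde2. pose proof (mix_bound J x (fun j => Defs.d2 z j n) (u2 x z n) (Rmin (Defs.d2 z J n) (e1 z (S J) n - v z (S J) n)) (X n) Hxinc Hy).
      change (Bn n) with ((sumR 0 J (fun j => Rabs (Defs.d1 z j n) + Rabs (u1 x z n j)) + Rabs (Rmin (Defs.d1 z J n) (e1 z (S J) n)))
        + (sumR 0 J (fun j => Rabs (Defs.d2 z j n) + Rabs (u2 x z n j)) + Rabs (Rmin (Defs.d2 z J n) (e1 z (S J) n - v z (S J) n)))) in H. pose proof (Rabs_pos (Rmin (Defs.d1 z J n) (e1 z (S J) n))).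
      assert (0 <= sumR 0 J (fun j => Rabs (Defs.d1 z j n) + Rabs (u1 x z n j))) by
        (apply sumR_nonneg; intros; pose proof (Rabs_pos (Defs.d1 z i n)); pose proof (Rabs_pos (u1 x z n i)); lra).
      lra.
  - intros X rho HX Hr. apply (payoff_ge N J t s0 x c a l HM HP); auto.
Qed.
End Main3.

Fixpoint maxf (k : nat) (g : nat -> R) : R :=
  match k with O => g 0%nat | S k' => Rmax (maxf k' g) (g (S k')) end.

Lemma maxf_ge k g i : (i <= k)%nat -> g i <= maxf k g.
Proof. induction k; intros Hi; simpl. replace i with 0%nat by lia. lra.
  destruct (Nat.eq_dec i (S k)). subst. apply Rmax_r. eapply Rle_trans. apply IHk. lia. apply Rmax_l. Qed.

Lemma maxf_attain k g : exists i, (i <= k)%nat /\ maxf k g = g i.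
Proof. induction k; simpl. exists 0%nat. split; auto.
  destruct IHk as [i [Hi E]]. unfold Rmax. destruct (Rle_dec (maxf k g) (g (S k))).
  exists (S k). split; auto. exists i. split; auto; lia. Qed.

Section LB.
Variables (N J : nat) (t : nat -> R) (s0 : R) (x : nat -> R) (c : nat -> nat -> R) (a : R -> R -> R) (l : nat -> R).
Hypothesis HM : market_assumptions N J t s0 x c.

Lemma phat_pos j n : (1 <= n <= N)%nat -> (j <= S J)%nat -> 0 < phat J s0 x c j n.
Proof.
  destruct HM as [HN [HJ [Ht0 [Htinc [Hs0 [Hx0 [Hxinc [Hc Hcinc]]]]]]]].
  intros Hn Hj. destruct (Hc n Hn) as [C0 [C1 [C2 [C3 [C4 C5]]]]]. unfold phat.
  destruct (Nat.eqb j 0) eqn:E0. lra.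
  apply Nat.eqb_neq in E0. destruct (Nat.ltb j J) eqn:E1.
  - apply Nat.ltb_lt in E1. specialize (C4 j ltac:(lia)). lra.
  - apply Nat.ltb_ge in E1. destruct (Nat.eqb j J) eqn:E2. auto.
    apply Nat.eqb_neq in E2. replace j with (S J) by lia. rewrite Nat.eqb_refl. auto. Qed.

Lemma step_nonneg z n : lp_feasible N J t x a l z -> (1 <= n <= N - 1)%nat ->
  0 <= sumR 0 (S J) (fun j => e1 z j n * phat J s0 x c j n) + sumR 0 (S J) (fun j => e2 z j (S n) * phat J s0 x c j (S n)).
Proof.
  pose proof HM as HM'. destruct HM' as [HN [HJ [Ht0 [Htinc [Hs0 [Hx0 [Hxinc [Hc Hcinc]]]]]]]].
  intros [Hb [Hvpos [Hi [Hii Hiii]]]] Hn.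
  destruct (Hii n Hn) as [A1 [A2 [A3 A4]]].
  set (h := fun j => if Nat.leb j J then maxf J (fun i => - e1 z i n - Defs.d1 z i n * (x j - x i))
                     else maxf J (fun i => - Defs.d1 z i n)).
  assert (hA : forall k, (k <= J)%nat -> h k <= e2 z k (S n)).
  { intros k Hk. unfold h. rewrite (proj2 (Nat.leb_le k J)) by auto.
    destruct (maxf_attain J (fun i => - e1 z i n - Defs.d1 z i n * (x k - x i))) as [i [Hi0 E]]. rewrite E.
    specialize (A1 i k Hi0 Hk). lra. }
  assert (hB : h (S J) <= e2 z (S J) (S n)).
  { unfold h. rewrite (proj2 (Nat.leb_nle (S J) J)) by lia.
    destruct (maxf_attain J (fun i => - Defs.d1 z i n)) as [i [Hi0 E]]. rewrite E. specialize (A3 i Hi0). lra. }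
  assert (hC : forall j, (j <= J)%nat -> - h j <= e1 z j n).
  { intros j Hj. unfold h. rewrite (proj2 (Nat.leb_le j J)) by auto.
    pose proof (maxf_ge J (fun i => - e1 z i n - Defs.d1 z i n * (x j - x i)) j Hj). simpl in H.
    replace (x j - x j) with 0 in H by ring. lra. }
  assert (Hg : forall j, (1 <= j <= J)%nat -> 0 <= gamma J x h j).
  { intros j Hj. unfold gamma, slope. rewrite (proj2 (Nat.eqb_neq j 0)) by lia.
    rewrite (proj2 (Nat.ltb_lt (j - 1) J)) by lia. replace (S (j - 1)) with j by lia.
    destruct (maxf_attain J (fun i => - e1 z i n - Defs.d1 z i n * (x j - x i))) as [i [Hi0 E]].
    assert (Hhj : h j = - e1 z i n - Defs.d1 z i n * (x j - x i)).
    { unfold h. rewrite (proj2 (Nat.leb_le j J)) by lia. exact E. }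
    assert (Hhm : h (j - 1)%nat >= h j - (- Defs.d1 z i n) * (x j - x (j - 1)%nat)).
    { rewrite Hhj. unfold h. rewrite (proj2 (Nat.leb_le (j - 1) J)) by lia.
      pose proof (maxf_ge J (fun i => - e1 z i n - Defs.d1 z i n * (x (j - 1)%nat - x i)) i Hi0). simpl in H. nra. }
    pose proof (Hxinc (j - 1)%nat ltac:(lia)) as Hx1. replace (S (j - 1)) with j in Hx1 by lia.
    assert (Hs1 : (h j - h (j - 1)%nat) / (x j - x (j - 1)%nat) <= - Defs.d1 z i n).
    { apply (Rmult_le_reg_r (x j - x (j - 1)%nat)). lra. unfold Rdiv. rewrite Rmult_assoc, Rinv_l by lra. lra. }
    destruct (Nat.ltb j J) eqn:EJ.
    - apply Nat.ltb_lt in EJ. pose proof (Hxinc j EJ).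
      assert (Hhp : h (S j) >= h j + (- Defs.d1 z i n) * (x (S j) - x j)).
      { rewrite Hhj. unfold h. rewrite (proj2 (Nat.leb_le (S j) J)) by lia.
        pose proof (maxf_ge J (fun i => - e1 z i n - Defs.d1 z i n * (x (S j) - x i)) i Hi0). simpl in H0. nra. }
      assert (- Defs.d1 z i n <= (h (S j) - h j) / (x (S j) - x j)).
      { apply (Rmult_le_reg_r (x (S j) - x j)). lra. unfold Rdiv. rewrite Rmult_assoc, Rinv_l by lra. lra. }
      lra.
    - assert (j = J) by (apply Nat.ltb_ge in EJ; lia). subst j.
      assert (- Defs.d1 z i n <= h (S J)).
      { unfold h. rewrite (proj2 (Nat.leb_nle (S J) J)) by lia.
        apply (maxf_ge J (fun i => - Defs.d1 z i n) i Hi0). }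
      lra. }
  assert (Hn1 : (1 <= n <= N)%nat) by lia. assert (Hn2 : (1 <= S n <= N)%nat) by lia.
  destruct (Hc n Hn1) as [C0 _]. destruct (Hc (S n) Hn2) as [C0' _].
  assert (Hid1 := cost_identity J s0 x c n Hxinc Hx0 C0 HJ h).
  assert (Hid2 := cost_identity J s0 x c (S n) Hxinc Hx0 C0' HJ h).
  assert (Hlow : sumR 0 (S J) (fun j => h j * (phat J s0 x c j (S n) - phat J s0 x c j n)) <=
     sumR 0 (S J) (fun j => e1 z j n * phat J s0 x c j n) + sumR 0 (S J) (fun j => e2 z j (S n) * phat J s0 x c j (S n))).
  { rewrite <- sumR_plus. rewrite sumR_last by lia. rewrite (sumR_last 0 J (fun j => _ + _)) by lia.
    assert (Hs : sumR 0 J (fun j => h j * (phat J s0 x c j (S n) - phat J s0 x c j n)) <=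
                 sumR 0 J (fun j => e1 z j n * phat J s0 x c j n + e2 z j (S n) * phat J s0 x c j (S n))).
    { apply sumR_le. intros j Hj. pose proof (phat_pos j n Hn1 ltac:(lia)). pose proof (phat_pos j (S n) Hn2 ltac:(lia)).
      pose proof (hA j ltac:(lia)). pose proof (hC j ltac:(lia)). nra. }
    assert (HpJ : phat J s0 x c (S J) n = c J n /\ phat J s0 x c (S J) (S n) = c J (S n)).
    { unfold phat. rewrite (proj2 (Nat.eqb_neq (S J) 0)) by lia.
      rewrite (proj2 (Nat.ltb_ge (S J) J)) by lia. rewrite (proj2 (Nat.eqb_neq (S J) J)) by lia.
      rewrite Nat.eqb_refl. auto. }
    destruct HpJ as [Hp1 Hp2]. rewrite Hp1, Hp2.
    pose proof (Hcinc J n ltac:(lia) ltac:(lia)). pose proof (phat_pos (S J) n Hn1 ltac:(lia)). rewrite Hp1 in H0.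
    assert (0 <= (e2 z (S J) (S n) - h (S J)) * (c J (S n) - c J n)) by (apply Rmult_le_pos; lra).
    assert (0 <= (e1 z (S J) n + e2 z (S J) (S n)) * c J n) by (apply Rmult_le_pos; lra).
    nra. }
  assert (Hdiff : sumR 0 (S J) (fun j => h j * (phat J s0 x c j (S n) - phat J s0 x c j n)) =
      sumR 0 J (fun j => gamma J x h j * (c j (S n) - c j n))).
  { rewrite (sumR_ext 0 (S J) _ (fun j => h j * phat J s0 x c j (S n) - h j * phat J s0 x c j n)) by (intros; ring).
    rewrite sumR_minus, Hid1, Hid2.
    rewrite (sumR_ext 0 J (fun j => gamma J x h j * (c j (S n) - c j n)) (fun j => gamma J x h j * c j (S n) - gamma J x h j * c j n)) by (intros; ring).
    rewrite sumR_minus. ring. }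
  assert (Hpos : 0 <= sumR 0 J (fun j => gamma J x h j * (c j (S n) - c j n))).
  { apply sumR_nonneg. intros j Hj. destruct j.
    rewrite C0, C0'. lra. apply Rmult_le_pos. apply Hg; lia. pose proof (Hcinc (S j) n ltac:(lia) ltac:(lia)). lra. }
  lra.
Qed.

Lemma obj_nonneg z : lp_feasible N J t x a l z -> 0 <= lp_objective N J s0 x c z.
Proof.
  pose proof HM as HM'. destruct HM' as [HN [HJ [Ht0 [Htinc [Hs0 [Hx0 [Hxinc [Hc Hcinc]]]]]]]].
  intros Hf. pose proof Hf as [Hb [Hvpos _]].
  unfold lp_objective.
  rewrite (sumR_ext 1 N _ (fun n => sumR 0 (S J) (fun j => e1 z j n * phat J s0 x c j n) + sumR 0 (S J) (fun j => e2 z j n * phat J s0 x c j n))).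
  2:{ intros. rewrite <- sumR_plus. apply sumR_ext. intros; ring. }
  rewrite sumR_plus.
  assert (E1 : sumR 1 N (fun n => sumR 0 (S J) (fun j => e1 z j n * phat J s0 x c j n)) =
               sumR 1 (N - 1) (fun n => sumR 0 (S J) (fun j => e1 z j n * phat J s0 x c j n))).
  { destruct N as [|N']. lia. rewrite sumR_last by lia. replace (S N' - 1)%nat with N' by lia.
    rewrite (sumR_zero 0 (S J) (fun j => e1 z j (S N') * _)). ring. intros i Hi. rewrite (proj1 (Hb i ltac:(lia))). ring. }
  assert (E2 : sumR 1 N (fun n => sumR 0 (S J) (fun j => e2 z j n * phat J s0 x c j n)) =
               sumR 1 (N - 1) (fun n => sumR 0 (S J) (fun j => e2 z j (S n) * phat J s0 x c j (S n)))).
  { destruct N as [|N']. lia. rewrite sumR_first by lia. replace (S N' - 1)%nat with N' by lia.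
    rewrite (sumR_zero 0 (S J) (fun j => e2 z j 1%nat * _)). rewrite sumR_shift. ring.
    intros i Hi. rewrite (proj2 (Hb i ltac:(lia))). ring. }
  rewrite E1, E2, <- sumR_plus.
  assert (0 <= sumR 1 (N - 1) (fun n => sumR 0 (S J) (fun j => e1 z j n * phat J s0 x c j n) + sumR 0 (S J) (fun j => e2 z j (S n) * phat J s0 x c j (S n)))).
  { apply sumR_nonneg. intros n Hn. apply step_nonneg; auto. }
  assert (0 <= sumR 0 (S J) (fun j => v z j N * phat J s0 x c j N)).
  { apply sumR_nonneg. intros j Hj. apply Rmult_le_pos. apply Hvpos; lia. left. apply phat_pos; lia. }
  lra.
Qed.
End LB.

Definition affK (K : nat) (g : (nat -> R) -> R) : Prop :=
  exists (aa : nat -> R) (b : R), forall w, g w = b + sum_lt K (fun i => aa i * w i).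

Definition unitv (i : nat) : nat -> R := fun k => if Nat.eqb k i then 1 else 0.
Definition zerov : nat -> R := fun _ => 0.
Definition coef (g : (nat -> R) -> R) (i : nat) : R := g (unitv i) - g zerov.
Definition upd (w : nat -> R) (K : nat) (y : R) : nat -> R := fun i => if Nat.eqb i K then y else w i.

Lemma sum_unit K aa i : sum_lt K (fun k => aa k * unitv i k) = if Nat.ltb i K then aa i else 0.
Proof. induction K; simpl. destruct i; reflexivity. rewrite IHK. unfold unitv.
  destruct (Nat.eqb K i) eqn:E. apply Nat.eqb_eq in E. subst.
  rewrite (proj2 (Nat.ltb_ge i i)) by lia. rewrite (proj2 (Nat.ltb_lt i (S i))) by lia. ring.
  apply Nat.eqb_neq in E. destruct (Nat.ltb i K) eqn:E2.
  apply Nat.ltb_lt in E2. rewrite (proj2 (Nat.ltb_lt i (S K))) by lia. ring.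
  apply Nat.ltb_ge in E2. rewrite (proj2 (Nat.ltb_ge i (S K))) by lia. ring. Qed.

Lemma sum_zero K aa : sum_lt K (fun k => aa k * zerov k) = 0.
Proof. apply sum_lt_zero. intros. unfold zerov. ring. Qed.

Lemma aff_repr K g : affK K g -> forall w, g w = g zerov + sum_lt K (fun i => coef g i * w i).
Proof. intros [aa [b H]] w. rewrite H. rewrite (H zerov). rewrite sum_zero. f_equal. ring.
  apply sum_lt_ext. intros i Hi. unfold coef. rewrite !H. rewrite sum_unit, sum_zero.
  rewrite (proj2 (Nat.ltb_lt i K)) by auto. ring. Qed.

Lemma aff_local K g w w' : affK K g -> (forall i, (i < K)%nat -> w i = w' i) -> g w = g w'.
Proof. intros [aa [b H]] Hw. rewrite !H. f_equal. apply sum_lt_ext. intros. rewrite Hw; auto. Qed.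

Lemma aff_upd K g w y : affK (S K) g -> g (upd w K y) = g (upd w K 0) + coef g K * y.
Proof. intros Ha. rewrite (aff_repr (S K) g Ha (upd w K y)), (aff_repr (S K) g Ha (upd w K 0)). cbn [sum_lt]. unfold upd at 2 4. rewrite Nat.eqb_refl.
  rewrite (sum_lt_ext K (fun i => coef g i * upd w K y i) (fun i => coef g i * upd w K 0 i)). ring.
  intros i Hi. unfold upd. rewrite (proj2 (Nat.eqb_neq i K)) by lia. auto. Qed.

Definition lmax (d : R) (l : list R) : R := fold_right Rmax d l.
Lemma lmax_ge d l : d <= lmax d l /\ forall u, In u l -> u <= lmax d l.
Proof. induction l; simpl. split. lra. tauto. destruct IHl as [H1 H2]. split.
  eapply Rle_trans. apply H1. apply Rmax_r. intros u [Hu|Hu]. subst. apply Rmax_l.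
  eapply Rle_trans. apply H2; auto. apply Rmax_r. Qed.
Lemma lmax_in d l : lmax d l = d \/ In (lmax d l) l.
Proof. induction l; simpl. auto. unfold Rmax. destruct (Rle_dec a (lmax d l)).
  destruct IHl as [H|H]. left; auto. right; right; auto. right; left; auto. Qed.
Definition lmin (d : R) (l : list R) : R := fold_right Rmin d l.
Lemma lmin_le d l : lmin d l <= d /\ forall u, In u l -> lmin d l <= u.
Proof. induction l; simpl. split. lra. tauto. destruct IHl as [H1 H2]. split.
  eapply Rle_trans. apply Rmin_r. apply H1. intros u [Hu|Hu]. subst. apply Rmin_l.
  eapply Rle_trans. apply Rmin_r. apply H2; auto. Qed.

Section FM.
Variable K : nat.
Definition isz (g : (nat -> R) -> R) : bool := if Req_EM_T (coef g K) 0 then true else false.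
Definition isp (g : (nat -> R) -> R) : bool := if Rlt_dec 0 (coef g K) then true else false.
Definition isn (g : (nat -> R) -> R) : bool := if Rlt_dec (coef g K) 0 then true else false.
Definition combo (P Q : (nat -> R) -> R) : (nat -> R) -> R := fun w => (- coef Q K) * P w + coef P K * Q w.
Definition elim (cs : list ((nat -> R) -> R)) : list ((nat -> R) -> R) :=
  filter isz cs ++ flat_map (fun P => map (fun Q => combo P Q) (filter isn cs)) (filter isp cs).

Lemma aff_drop g : affK (S K) g -> coef g K = 0 -> affK K g.
Proof. intros Ha Hc. exists (coef g), (g zerov). intros w. rewrite (aff_repr _ _ Ha). cbn [sum_lt]. rewrite Hc. ring. Qed.

Lemma coef_combo P Q : affK (S K) P -> affK (S K) Q -> coef (combo P Q) K = 0.
Proof. intros HP HQ. unfold combo, coef. ring. Qed.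

Lemma aff_combo P Q : affK (S K) P -> affK (S K) Q -> affK (S K) (combo P Q).
Proof. intros [a1 [b1 H1]] [a2 [b2 H2]]. exists (fun i => - coef Q K * a1 i + coef P K * a2 i), (- coef Q K * b1 + coef P K * b2).
  intros w. unfold combo. rewrite H1, H2.
  rewrite (sum_lt_ext _ (fun i => (- coef Q K * a1 i + coef P K * a2 i) * w i) (fun i => - coef Q K * (a1 i * w i) + coef P K * (a2 i * w i))) by (intros; ring).
  rewrite sum_lt_plus, !sum_lt_scal. ring. Qed.

Lemma in_elim g cs : In g (elim cs) ->
  (In g cs /\ coef g K = 0) \/ (exists P Q, In P cs /\ In Q cs /\ 0 < coef P K /\ coef Q K < 0 /\ g = combo P Q).
Proof. unfold elim. intros H. apply in_app_or in H. destruct H as [H|H].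
  - apply filter_In in H. destruct H as [H1 H2]. unfold isz in H2. destruct (Req_EM_T (coef g K) 0); try discriminate. left; auto.
  - apply in_flat_map in H. destruct H as [P [HP HQ]]. apply in_map_iff in HQ. destruct HQ as [Q [E HQ]].
    apply filter_In in HP. apply filter_In in HQ. destruct HP as [HP1 HP2]. destruct HQ as [HQ1 HQ2].
    unfold isp in HP2. unfold isn in HQ2. destruct (Rlt_dec 0 (coef P K)); try discriminate.
    destruct (Rlt_dec (coef Q K) 0); try discriminate. right. exists P, Q. auto. Qed.

Lemma elim_aff cs : (forall g, In g cs -> affK (S K) g) -> forall g, In g (elim cs) -> affK K g.
Proof. intros Ha g Hg. destruct (in_elim g cs Hg) as [[H1 H2]|[P [Q [HP [HQ [_ [_ E]]]]]]].
  apply aff_drop; auto. subst. apply aff_drop. apply aff_combo; auto. apply coef_combo; auto. Qed.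

Lemma elim_correct cs w : (forall g, In g cs -> affK (S K) g) ->
  ((exists y, forall g, In g cs -> 0 <= g (upd w K y)) <-> (forall g, In g (elim cs) -> 0 <= g w)).
Proof.
  intros Ha. assert (Hloc : forall g' y, In g' (elim cs) -> g' w = g' (upd w K y)).
  { intros g' y Hg'. apply (aff_local K). apply (elim_aff cs Ha); auto. intros i Hi. unfold upd.
    rewrite (proj2 (Nat.eqb_neq i K)) by lia. auto. }
  split.
  - intros [y Hy] g Hg. rewrite (Hloc g y Hg). destruct (in_elim g cs Hg) as [[H1 H2]|[P [Q [HP [HQ [HP0 [HQ0 E]]]]]]].
    + apply Hy; auto.
    + subst. unfold combo. pose proof (Hy P HP). pose proof (Hy Q HQ).
      assert (0 <= - coef Q K * P (upd w K y)) by (apply Rmult_le_pos; lra).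
      assert (0 <= coef P K * Q (upd w K y)) by (apply Rmult_le_pos; lra). lra.
  - intros Hn.
    set (r := fun g : (nat -> R) -> R => g (upd w K 0)).
    assert (Hr : forall g y, In g cs -> g (upd w K y) = r g + coef g K * y).
    { intros g y Hg. unfold r. apply aff_upd. auto. }
    set (Lf := fun P => - r P / coef P K).
    assert (Hpair : forall P Q, In P cs -> In Q cs -> 0 < coef P K -> coef Q K < 0 -> Lf P <= r Q / (- coef Q K)).
    { intros P Q HP HQ HP0 HQ0. assert (Hc : In (combo P Q) (elim cs)).
      { unfold elim. apply in_or_app. right. apply in_flat_map. exists P. split.
        apply filter_In. split; auto. unfold isp. destruct (Rlt_dec 0 (coef P K)); auto; lra.
        apply in_map_iff. exists Q. split; auto. apply filter_In. split; auto. unfold isn. destruct (Rlt_dec (coef Q K) 0); auto; lra. }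
      pose proof (Hn _ Hc) as H0. rewrite (Hloc _ 0 Hc) in H0. unfold combo in H0. fold (r P) (r Q) in H0.
      unfold Lf. apply (Rmult_le_reg_r (coef P K * - coef Q K)). nra.
      replace (- r P / coef P K * (coef P K * - coef Q K)) with (r P * coef Q K) by (field; lra).
      replace (r Q / - coef Q K * (coef P K * - coef Q K)) with (r Q * coef P K) by (field; lra). lra. }
    assert (Hz : forall g, In g cs -> coef g K = 0 -> 0 <= r g).
    { intros g Hg Hc. assert (Hi : In g (elim cs)). { unfold elim. apply in_or_app. left. apply filter_In. split; auto.
        unfold isz. destruct (Req_EM_T (coef g K) 0); auto; lra. }
      pose proof (Hn g Hi). rewrite (Hloc g 0 Hi) in H. exact H. }
    destruct (filter isp cs) as [|P0 ps] eqn:Ep.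
    +
      assert (Hnp : forall g, In g cs -> coef g K <= 0).
      { intros g Hg. destruct (Rle_dec (coef g K) 0); auto. exfalso.
        assert (In g (filter isp cs)). { apply filter_In. split; auto. unfold isp. destruct (Rlt_dec 0 (coef g K)); auto; lra. }
        rewrite Ep in H. destruct H. }
      set (Uf := fun Q => r Q / (- coef Q K)).
      destruct (filter isn cs) as [|Q0 qs] eqn:En.
      * exists 0. intros g Hg. rewrite Hr by auto. assert (coef g K = 0).
        { destruct (Req_EM_T (coef g K) 0); auto. exfalso. assert (In g (filter isn cs)).
          { apply filter_In. split; auto. unfold isn. destruct (Rlt_dec (coef g K) 0); auto. pose proof (Hnp g Hg). lra. }
          rewrite En in H. destruct H. }
        rewrite H. rewrite Rmult_0_l, Rplus_0_r. apply Hz; auto.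
      * exists (lmin (Uf Q0) (map Uf qs)). intros g Hg. rewrite Hr by auto.
        destruct (Req_EM_T (coef g K) 0) as [E0|E0].
        rewrite E0, Rmult_0_l, Rplus_0_r. apply Hz; auto.
        assert (Hgn : In g (filter isn cs)).
        { apply filter_In. split; auto. unfold isn. destruct (Rlt_dec (coef g K) 0); auto. pose proof (Hnp g Hg). lra. }
        assert (Hneg : coef g K < 0) by (pose proof (Hnp g Hg); lra).
        assert (Hle : lmin (Uf Q0) (map Uf qs) <= Uf g).
        { destruct (lmin_le (Uf Q0) (map Uf qs)) as [H1 H2]. rewrite En in Hgn. destruct Hgn as [E|Hq].
          subst; auto. apply H2. apply in_map; auto. }
        unfold Uf in Hle. set (m := lmin (Uf Q0) (map Uf qs)) in *.
        assert (m * - coef g K <= r g) . { apply (Rmult_le_compat_r (- coef g K)) in Hle. 2: lra.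
          replace (r g / - coef g K * - coef g K) with (r g) in Hle by (field; lra). auto. }
        lra.
    + set (y := lmax (Lf P0) (map Lf ps)).
      assert (HP0 : In P0 (filter isp cs)) by (rewrite Ep; left; auto).
      assert (Hyin : exists P, In P cs /\ 0 < coef P K /\ y = Lf P).
      { destruct (lmax_in (Lf P0) (map Lf ps)) as [E|E].
        - exists P0. apply filter_In in HP0. destruct HP0 as [H1 H2]. unfold isp in H2.
          destruct (Rlt_dec 0 (coef P0 K)); try discriminate. auto.
        - apply in_map_iff in E. destruct E as [P [E HP]]. exists P.
          assert (In P (filter isp cs)) by (rewrite Ep; right; auto). apply filter_In in H. destruct H as [H1 H2].
          unfold isp in H2. destruct (Rlt_dec 0 (coef P K)); try discriminate. auto. }
      destruct Hyin as [Ps [HPs [HPs0 Ey]]].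
      exists y. intros g Hg. rewrite Hr by auto.
      destruct (Rlt_dec 0 (coef g K)) as [Hpos|Hnpos].
      * assert (Hgp : In g (filter isp cs)). { apply filter_In. split; auto. unfold isp. destruct (Rlt_dec 0 (coef g K)); auto; lra. }
        assert (Hle : Lf g <= y). { destruct (lmax_ge (Lf P0) (map Lf ps)) as [H1 H2]. rewrite Ep in Hgp. destruct Hgp as [E|Hq].
          subst; auto. apply H2. apply in_map; auto. }
        unfold Lf in Hle. apply (Rmult_le_compat_r (coef g K)) in Hle. 2: lra.
        replace (- r g / coef g K * coef g K) with (- r g) in Hle by (field; lra). lra.
      * destruct (Req_EM_T (coef g K) 0) as [E0|E0].
        rewrite E0, Rmult_0_l, Rplus_0_r. apply Hz; auto.
        assert (Hneg : coef g K < 0) by lra.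
        pose proof (Hpair Ps g HPs Hg HPs0 Hneg). rewrite <- Ey in H.
        apply (Rmult_le_compat_r (- coef g K)) in H. 2: lra.
        replace (r g / - coef g K * - coef g K) with (r g) in H by (field; lra). lra.
Qed.
End FM.

Definition mixv (w w' : nat -> R) : nat -> R := fun i => if Nat.eqb i 0 then w 0%nat else w' i.

Lemma FM_all : forall m cs, (forall g, In g cs -> affK (S m) g) ->
  exists cs1, (forall g, In g cs1 -> affK 1 g) /\
    forall w, (exists w', forall g, In g cs -> 0 <= g (mixv w w')) <-> (forall g, In g cs1 -> 0 <= g w).
Proof.
  induction m; intros cs Ha.
  - exists cs. split; auto. intros w. split.
    + intros [w' Hw'] g Hg. rewrite (aff_local 1 g w (mixv w w')). apply Hw'; auto. auto.
      intros i Hi. unfold mixv. replace i with 0%nat by lia. reflexivity.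
    + intros H. exists w. intros g Hg. rewrite (aff_local 1 g (mixv w w) w). apply H; auto. auto.
      intros i Hi. unfold mixv. replace i with 0%nat by lia. reflexivity.
  - destruct (IHm (elim (S m) cs) (elim_aff (S m) cs Ha)) as [cs1 [Ha1 H1]].
    exists cs1. split; auto. intros w. rewrite <- H1. split.
    + intros [w' Hw']. exists w'. apply (elim_correct (S m) cs (mixv w w') Ha).
      exists (w' (S m)). intros g Hg. rewrite (aff_local (S (S m)) g _ (mixv w w')). apply Hw'; auto. auto.
      intros i Hi. unfold upd, mixv. destruct (Nat.eqb i (S m)) eqn:E. apply Nat.eqb_eq in E. subst. reflexivity. reflexivity.
    + intros [w' Hw']. apply (elim_correct (S m) cs (mixv w w') Ha) in Hw'. destruct Hw' as [y Hy].
      exists (upd w' (S m) y). intros g Hg. rewrite (aff_local (S (S m)) g _ (upd (mixv w w') (S m) y)). apply Hy; auto. auto.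
      intros i Hi. unfold upd, mixv. destruct (Nat.eqb i 0) eqn:E0. apply Nat.eqb_eq in E0. subst. reflexivity. reflexivity.
Qed.

Lemma Fa_app {A} (l1 l2 : list A) (P : A -> Prop) :
  (forall g, In g (l1 ++ l2) -> P g) <-> (forall g, In g l1 -> P g) /\ (forall g, In g l2 -> P g).
Proof. split. intros H. split; intros; apply H; apply in_or_app; auto.
  intros [H1 H2] g Hg. apply in_app_or in Hg. destruct Hg; auto. Qed.
Lemma Fa_cons {A} (a : A) l (P : A -> Prop) :
  (forall g, In g (a :: l) -> P g) <-> P a /\ (forall g, In g l -> P g).
Proof. split. intros H. split. apply H; left; auto. intros; apply H; right; auto.
  intros [H1 H2] g [Hg|Hg]. subst; auto. auto. Qed.
Lemma Fa_nil {A} (P : A -> Prop) : (forall g, In g [] -> P g) <-> True.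
Proof. split; auto. intros _ g []. Qed.
Lemma Fa_map {A B} (f : A -> B) l (P : B -> Prop) :
  (forall g, In g (map f l) -> P g) <-> (forall a, In a l -> P (f a)).
Proof. split. intros H a Ha. apply H. apply in_map; auto.
  intros H g Hg. apply in_map_iff in Hg. destruct Hg as [a [E Ha]]. subst. auto. Qed.
Lemma Fa_flat {A B} (f : A -> list B) l (P : B -> Prop) :
  (forall g, In g (flat_map f l) -> P g) <-> (forall a, In a l -> forall g, In g (f a) -> P g).
Proof. split. intros H a Ha g Hg. apply H. apply in_flat_map. eauto.
  intros H g Hg. apply in_flat_map in Hg. destruct Hg as [a [Ha Hg]]. eauto. Qed.
Lemma Fa_seq s k (Q : nat -> Prop) : (forall a, In a (seq s k) -> Q a) <-> (forall a, (s <= a < s + k)%nat -> Q a).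
Proof. split; intros H a Ha; apply H; apply in_seq; auto. Qed.

Section AFF.
Variable K : nat.
Lemma aff_coord p : (p < K)%nat -> affK K (fun w => w p).
Proof. intros Hp. exists (unitv p), 0. intros w. rewrite (sum_lt_ext K _ (fun i => w i * unitv p i)) by (intros; ring).
  rewrite sum_unit. rewrite (proj2 (Nat.ltb_lt p K)) by auto. ring. Qed.
Lemma aff_const b : affK K (fun _ => b).
Proof. exists (fun _ => 0), b. intros w. rewrite sum_lt_zero. ring. intros; ring. Qed.
Lemma aff_add g1 g2 : affK K g1 -> affK K g2 -> affK K (fun w => g1 w + g2 w).
Proof. intros [a1 [b1 H1]] [a2 [b2 H2]]. exists (fun i => a1 i + a2 i), (b1 + b2). intros w. rewrite H1, H2.
  rewrite (sum_lt_ext K (fun i => (a1 i + a2 i) * w i) (fun i => a1 i * w i + a2 i * w i)) by (intros; ring).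
  rewrite sum_lt_plus. ring. Qed.
Lemma aff_scal c g : affK K g -> affK K (fun w => c * g w).
Proof. intros [a1 [b1 H1]]. exists (fun i => c * a1 i), (c * b1). intros w. rewrite H1.
  rewrite (sum_lt_ext K (fun i => (c * a1 i) * w i) (fun i => c * (a1 i * w i))) by (intros; ring).
  rewrite sum_lt_scal. ring. Qed.
Lemma aff_scalr c g : affK K g -> affK K (fun w => g w * c).
Proof. intros H. apply (aff_scal c) in H. destruct H as [a1 [b1 H1]]. exists a1, b1. intros w. rewrite <- H1. ring. Qed.
Lemma aff_opp g : affK K g -> affK K (fun w => - g w).
Proof. intros H. apply (aff_scal (-1)) in H. destruct H as [a1 [b1 H1]]. exists a1, b1. intros w. rewrite <- H1. ring. Qed.
Lemma aff_sub g1 g2 : affK K g1 -> affK K g2 -> affK K (fun w => g1 w - g2 w).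
Proof. intros H1 H2. apply aff_opp in H2. pose proof (aff_add _ _ H1 H2) as [a [b H]]. exists a, b. intros w. rewrite <- H. ring. Qed.
Lemma aff_sum_lt k (G : nat -> (nat -> R) -> R) : (forall i, (i < k)%nat -> affK K (G i)) ->
  affK K (fun w => sum_lt k (fun i => G i w)).
Proof. induction k; intros H; simpl. apply aff_const. apply aff_add. apply IHk. intros; apply H; lia. apply H; lia. Qed.
Lemma aff_sumR m n (G : nat -> (nat -> R) -> R) : (forall i, (m <= i <= n)%nat -> affK K (G i)) ->
  affK K (fun w => sumR m n (fun i => G i w)).
Proof. intros H. unfold sumR. apply (aff_sum_lt _ (fun i w => G (m + i)%nat w)). intros. apply H. lia. Qed.
End AFF.

Definition rng (s k : nat) : list nat := seq s k.
Lemma Fa_rng s k (Q : nat -> Prop) : (forall a, In a (rng s k) -> Q a) <-> (forall a, (s <= a < s + k)%nat -> Q a).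
Proof. unfold rng. apply Fa_seq. Qed.
Lemma Fa_single {A} (g0 : A) (P : A -> Prop) : (forall g, In g [g0] -> P g) <-> P g0.
Proof. split. intros H; apply H; left; auto. intros H g [E|[]]. subst; auto. Qed.

Section ENC.
Variables (N J : nat) (t : nat -> R) (s0 : R) (x : nat -> R) (c : nat -> nat -> R) (a : R -> R -> R) (l : nat -> R).

Definition idx (f j n : nat) : nat := S (f + 5 * (j + S (S J) * n)).
Definition MM : nat := 5 * (S (S J)) * (S N).
Definition dec (w : nat -> R) : lpvar :=
  LPvar (fun j n => w (idx 0 j n)) (fun j n => w (idx 1 j n)) (fun j n => w (idx 2 j n))
        (fun j n => w (idx 3 j n)) (fun j n => w (idx 4 j n)).

Variables (J1 J2 NM : nat).
Definition Lb : list ((nat -> R) -> R) :=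
  flat_map (fun j => [fun w => w (idx 0 j N)] ++ [fun w => - w (idx 0 j N)] ++ [fun w => w (idx 1 j 1)] ++ [fun w => - w (idx 1 j 1)]) (rng 0 J2).
Definition Lv : list ((nat -> R) -> R) :=
  flat_map (fun n => map (fun j => fun w => w (idx 2 j n)) (rng 0 J2)) (rng 1 N).
Definition Li : list ((nat -> R) -> R) :=
  flat_map (fun n => [fun w => w (idx 2 (S J) n) - l n] ++ map (fun j => fun w => w (idx 2 j n) - a (x j) (t n)) (rng 0 J1)) (rng 1 N).
Definition Lii : list ((nat -> R) -> R) :=
  flat_map (fun n => [fun w => w (idx 0 (S J) n) - w (idx 3 (S J) n)] ++ [fun w => w (idx 0 (S J) n) + w (idx 1 (S J) (S n))]
     ++ map (fun j => fun w => w (idx 1 (S J) (S n)) + w (idx 3 j n)) (rng 0 J1)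
     ++ flat_map (fun j => map (fun k => fun w => w (idx 0 j n) + w (idx 1 k (S n)) + (x k - x j) * w (idx 3 j n)) (rng 0 J1)) (rng 0 J1))
   (rng 1 NM).
Definition Liii : list ((nat -> R) -> R) :=
  flat_map (fun n => [fun w => w (idx 0 (S J) n) - w (idx 4 (S J) n) - w (idx 2 (S J) n)]
     ++ [fun w => w (idx 0 (S J) n) + w (idx 1 (S J) (S n)) - w (idx 2 (S J) n) + w (idx 2 (S J) (S n))]
     ++ map (fun j => fun w => w (idx 1 (S J) (S n)) + w (idx 4 j n) + w (idx 2 (S J) (S n))) (rng 0 J1)
     ++ flat_map (fun j => map (fun k => fun w => w (idx 0 j n) + w (idx 1 k (S n)) + (x k - x j) * w (idx 4 j n) - w (idx 2 j n) + w (idx 2 k (S n))) (rng 0 J1)) (rng 0 J1))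
   (rng 1 NM).
Definition Lobj : list ((nat -> R) -> R) := [fun w => w 0%nat - lp_objective N J s0 x c (dec w)].
Definition LL := Lb ++ Lv ++ Li ++ Lii ++ Liii ++ Lobj.

Lemma LL_iff w : J1 = S J -> J2 = S (S J) -> NM = (N - 1)%nat -> (forall g, In g LL -> 0 <= g w) <->
  lp_feasible N J t x a l (dec w) /\ lp_objective N J s0 x c (dec w) <= w 0%nat.
Proof.
  intros HJ1 HJ2 HNM. unfold LL, Lb, Lv, Li, Lii, Liii, Lobj.
  repeat first [setoid_rewrite Fa_app | setoid_rewrite Fa_flat | setoid_rewrite Fa_rng | setoid_rewrite Fa_single
     | setoid_rewrite Fa_map].
  unfold lp_feasible. cbn [dec e1 e2 v Defs.d1 Defs.d2].
  subst J1 J2 NM. split.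
  - intros [B [V [I [II [III O]]]]]. split; [|lra]. split; [|split;[|split;[|split]]].
    + intros j Hj. destruct (B j ltac:(lia)) as [b1 [b2 [b3 b4]]]. split; lra.
    + intros j n Hj Hn. apply (V n ltac:(lia) j ltac:(lia)).
    + intros n Hn. destruct (I n ltac:(lia)) as [i1 i2]. split. intros j Hj. specialize (i2 j ltac:(lia)). lra. lra.
    + intros n Hn. destruct (II n ltac:(lia)) as [p1 [p2 [p3 p4]]]. split; [|split;[|split]].
      intros j k Hj Hk. apply (p4 j ltac:(lia) k ltac:(lia)). auto. intros j Hj; apply p3; lia. auto.
    + intros n Hn. destruct (III n ltac:(lia)) as [p1 [p2 [p3 p4]]]. split; [|split;[|split]].
      intros j k Hj Hk. apply (p4 j ltac:(lia) k ltac:(lia)). auto. intros j Hj; apply p3; lia. auto.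
  - intros [[B [V [I [II III]]]] O]. split; [|split;[|split;[|split;[|split]]]].
    + intros j Hj. destruct (B j ltac:(lia)) as [b1 b2]. lra.
    + intros n Hn j Hj. apply V; lia.
    + intros n Hn. destruct (I n ltac:(lia)) as [i1 i2]. split. lra. intros j Hj. specialize (i1 j ltac:(lia)). lra.
    + intros n Hn. destruct (II n ltac:(lia)) as [p1 [p2 [p3 p4]]]. split; [|split;[|split]]; auto.
      intros j Hj; apply p3; lia. intros j Hj k Hk. apply p1; lia.
    + intros n Hn. destruct (III n ltac:(lia)) as [p1 [p2 [p3 p4]]]. split; [|split;[|split]]; auto.
      intros j Hj; apply p3; lia. intros j Hj k Hk. apply p1; lia.
    + lra.
Qed.
End ENC.

Ltac solve_aff := repeat first [ apply aff_sumR; intros | apply aff_coord; unfold idx, MM; nia | apply aff_add | apply aff_sub | apply aff_opp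
  | apply aff_scal | apply aff_scalr | apply aff_const ].

Lemma LL_aff N J t s0 x c a l J1 J2 NM : (1 <= N)%nat -> J1 = S J -> J2 = S (S J) -> NM = (N - 1)%nat ->
  forall g, In g (LL N J t s0 x c a l J1 J2 NM) -> affK (S (MM N J)) g.
Proof.
  intros HN HJ1 HJ2 HNM. unfold LL, Lb, Lv, Li, Lii, Liii, Lobj.
  repeat first [setoid_rewrite Fa_app | setoid_rewrite Fa_flat | setoid_rewrite Fa_rng | setoid_rewrite Fa_single
     | setoid_rewrite Fa_map].
  subst J1 J2 NM. unfold lp_objective, dec. cbn [e1 e2 v].
  repeat split; intros; solve_aff.
Qed.

Definition agree (J : nat) (z z' : lpvar) : Prop := forall j n, (j <= S J)%nat ->
  e1 z j n = e1 z' j n /\ e2 z j n = e2 z' j n /\ v z j n = v z' j n /\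
  Defs.d1 z j n = Defs.d1 z' j n /\ Defs.d2 z j n = Defs.d2 z' j n.

Lemma feas_ext N J t x a l z z' : agree J z z' -> lp_feasible N J t x a l z -> lp_feasible N J t x a l z'.
Proof.
  intros Hag [A [B [C [D E]]]].
  assert (H1 : forall j n, (j <= S J)%nat -> e1 z j n = e1 z' j n) by (intros; apply Hag; auto).
  assert (H2 : forall j n, (j <= S J)%nat -> e2 z j n = e2 z' j n) by (intros; apply Hag; auto).
  assert (H3 : forall j n, (j <= S J)%nat -> v z j n = v z' j n) by (intros; apply Hag; auto).
  assert (H4 : forall j n, (j <= S J)%nat -> Defs.d1 z j n = Defs.d1 z' j n) by (intros; apply Hag; auto).
  assert (H5 : forall j n, (j <= S J)%nat -> Defs.d2 z j n = Defs.d2 z' j n) by (intros; apply Hag; auto).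
  split; [|split;[|split;[|split]]].
  - intros j Hj. rewrite <- H1, <- H2 by lia. auto.
  - intros j n Hj Hn. rewrite <- H3 by lia. auto.
  - intros n Hn. destruct (C n Hn) as [C1 C2]. split. intros j Hj. rewrite <- H3 by lia. auto. rewrite <- H3 by lia. auto.
  - intros n Hn. destruct (D n Hn) as [D1 [D2 [D3 D4]]]. split; [|split;[|split]].
    + intros j k Hj Hk. rewrite <- H1, <- H2, <- H4 by lia. auto.
    + rewrite <- H1, <- H4 by lia. auto.
    + intros j Hj. rewrite <- H2, <- H4 by lia. auto.
    + rewrite <- H1, <- H2 by lia. auto.
  - intros n Hn. destruct (E n Hn) as [D1 [D2 [D3 D4]]]. split; [|split;[|split]].
    + intros j k Hj Hk. rewrite <- H1, <- H2, <- H5, <- !H3 by lia. auto.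
    + rewrite <- H1, <- H5, <- H3 by lia. auto.
    + intros j Hj. rewrite <- H2, <- H5, <- H3 by lia. auto.
    + rewrite <- H1, <- H2, <- !H3 by lia. auto.
Qed.

Lemma obj_ext N J s0 x c z z' : agree J z z' -> lp_objective N J s0 x c z = lp_objective N J s0 x c z'.
Proof. intros Hag. unfold lp_objective. f_equal.
  apply sumR_ext. intros n Hn. apply sumR_ext. intros j Hj. destruct (Hag j n ltac:(lia)) as [A [B _]]. rewrite A, B. auto.
  apply sumR_ext. intros j Hj. destruct (Hag j N ltac:(lia)) as [_ [_ [C _]]]. rewrite C. auto. Qed.

Definition enc (J : nat) (z : lpvar) (i : nat) : R :=
  let i' := (i - 1)%nat in let q := (i' / 5)%nat in let j := (q mod (S (S J)))%nat in let n := (q / S (S J))%nat in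
  match (i' mod 5)%nat with 0%nat => e1 z j n | 1%nat => e2 z j n | 2%nat => v z j n | 3%nat => Defs.d1 z j n | _ => Defs.d2 z j n end.

Lemma idx_dec J f j n : (f < 5)%nat -> (j <= S J)%nat ->
  ((idx J f j n - 1) mod 5 = f /\ ((idx J f j n - 1) / 5) mod (S (S J)) = j /\ ((idx J f j n - 1) / 5) / (S (S J)) = n)%nat.
Proof. intros Hf Hj. unfold idx.
  replace (S (f + 5 * (j + S (S J) * n)) - 1)%nat with (f + (j + n * S (S J)) * 5)%nat by lia.
  rewrite Nat.Div0.mod_add, Nat.div_add by lia. rewrite Nat.mod_small, Nat.div_small by lia. rewrite Nat.add_0_l.
  rewrite Nat.Div0.mod_add, Nat.div_add by lia. rewrite Nat.mod_small, Nat.div_small by lia. auto. Qed.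

Lemma dec_enc_agree J w z : agree J (dec J (mixv w (enc J z))) z.
Proof. intros j n Hj. cbn [dec e1 e2 v Defs.d1 Defs.d2]. unfold mixv.
  assert (Hz : forall f, Nat.eqb (idx J f j n) 0 = false) by reflexivity. rewrite !Hz.
  unfold enc. repeat split.
  - destruct (idx_dec J 0 j n ltac:(lia) Hj) as [A [B C]]. rewrite A, B, C. auto.
  - destruct (idx_dec J 1 j n ltac:(lia) Hj) as [A [B C]]. rewrite A, B, C. auto.
  - destruct (idx_dec J 2 j n ltac:(lia) Hj) as [A [B C]]. rewrite A, B, C. auto.
  - destruct (idx_dec J 3 j n ltac:(lia) Hj) as [A [B C]]. rewrite A, B, C. auto.
  - destruct (idx_dec J 4 j n ltac:(lia) Hj) as [A [B C]]. rewrite A, B, C. auto.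
Qed.

Lemma agree_sym J z z' : agree J z z' -> agree J z' z.
Proof. intros H j n Hj. destruct (H j n Hj) as [A [B [C [D E]]]]. repeat split; auto. Qed.

Theorem mainTheorem12 (N J : nat) (t : nat -> R) (s0 : R) (x : nat -> R)
    (c : nat -> nat -> R) (a : R -> R -> R) (l : nat -> R) :
  market_assumptions N J t s0 x c ->
  payoff_assumptions N t a l ->
  (exists zopt : lpvar,
     lp_feasible N J t x a l zopt /\
     (forall z, lp_feasible N J t x a l z ->
        lp_objective N J s0 x c zopt <= lp_objective N J s0 x c z) /\
     (* inf_{S^{R+,T}(a)} H <= Psi := lp_objective zopt *)
     (forall eps, 0 < eps -> exists St : strategy,
        in_SSS N J t x a St /\ cost N J c St < lp_objective N J s0 x c zopt + eps)) /\
  (forall z, lp_feasible N J t x a l z ->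
     in_SSS N J t x a (lp_strategy N J x z) /\
     cost N J c (lp_strategy N J x z) = lp_objective N J s0 x c z).
Proof.
  intros HM HP.
  destruct (mfacts N J t s0 x c HM) as [HN [HJ [Hx0 [Hxinc Hc0]]]].
  assert (Part2 : forall z, lp_feasible N J t x a l z ->
     in_SSS N J t x a (lp_strategy N J x z) /\ cost N J c (lp_strategy N J x z) = lp_objective N J s0 x c z).
  { intros z Hz. split. apply (in_SSS_lp N J t s0 x c a l HM HP z Hz). apply (cost_eq N J t s0 x c HM z). }
  split; [|exact Part2].
  set (cs := LL N J t s0 x c a l (S J) (S (S J)) (N - 1)).
  pose proof (LL_aff N J t s0 x c a l (S J) (S (S J)) (N - 1) HN eq_refl eq_refl eq_refl) as Haff.
  destruct (FM_all (MM N J) cs Haff) as [cs1 [Ha1 Hcs1]].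
  set (Sat := fun tt => forall g, In g cs1 -> 0 <= g (fun _ : nat => tt)).
  assert (HA : forall z, lp_feasible N J t x a l z -> Sat (lp_objective N J s0 x c z)).
  { intros z Hz. unfold Sat. apply Hcs1. exists (enc J z).
    apply (LL_iff N J t s0 x c a l (S J) (S (S J)) (N - 1)); auto.
    pose proof (dec_enc_agree J (fun _ => lp_objective N J s0 x c z) z) as Hag. split.
    apply (feas_ext N J t x a l z). apply agree_sym; auto. auto.
    rewrite (obj_ext N J s0 x c _ z Hag). unfold mixv. simpl. lra. }
  assert (HB : forall tt, Sat tt -> exists z, lp_feasible N J t x a l z /\ lp_objective N J s0 x c z <= tt).
  { intros tt Ht. unfold Sat in Ht. apply Hcs1 in Ht. destruct Ht as [w' Hw'].
    apply (LL_iff N J t s0 x c a l (S J) (S (S J)) (N - 1)) in Hw'; auto.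
    destruct Hw' as [F O]. exists (dec J (mixv (fun _ => tt) w')). split; auto. }
  assert (Hlow : forall tt, Sat tt -> 0 <= tt).
  { intros tt Ht. destruct (HB tt Ht) as [z [Hz Ho]]. pose proof (obj_nonneg N J t s0 x c a l HM z Hz). lra. }
  set (M1 := sumR 1 N (fun n => sumR 0 J (fun j => Rabs (a (x j) (t n))))).
  set (M2 := sumR 1 N (fun n => Rabs (l n))).
  assert (HM1 : forall j n, (j <= J)%nat -> (1 <= n <= N)%nat -> a (x j) (t n) <= M1).
  { intros j n Hj Hn. eapply Rle_trans. apply Rle_abs. unfold M1.
    eapply Rle_trans. 2:{ apply (sumR_term_le 1 N _ n). intros. apply sumR_nonneg. intros. apply Rabs_pos. auto. }
    apply (sumR_term_le 0 J (fun j => Rabs (a (x j) (t n))) j). intros. apply Rabs_pos. lia. }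
  assert (HM2 : forall n, (1 <= n <= N)%nat -> l n <= M2).
  { intros n Hn. eapply Rle_trans. apply Rle_abs. unfold M2. apply (sumR_term_le 1 N (fun n => Rabs (l n)) n).
    intros. apply Rabs_pos. auto. }
  assert (HM1p : 0 <= M1). { unfold M1. apply sumR_nonneg. intros. apply sumR_nonneg. intros. apply Rabs_pos. }
  assert (HM2p : 0 <= M2). { unfold M2. apply sumR_nonneg. intros. apply Rabs_pos. }
  set (z0 := LPvar (fun _ _ => 0) (fun _ _ => 0) (fun j _ => if Nat.leb j J then M1 else M2) (fun _ _ => 0)
                   (fun j _ => if Nat.leb j J then 0 else - M2)).
  assert (HSJ : Nat.leb (S J) J = false) by (apply Nat.leb_gt; lia).
  assert (Hle : forall j, (j <= J)%nat -> Nat.leb j J = true) by (intros; apply Nat.leb_le; auto).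
  assert (Hz0 : lp_feasible N J t x a l z0).
  { unfold lp_feasible, z0. cbn [e1 e2 v Defs.d1 Defs.d2]. split; [|split;[|split;[|split]]].
    - intros. split; auto.
    - intros j n Hj Hn. destruct (Nat.leb j J); auto.
    - intros n Hn. split. intros j Hj. rewrite Hle by auto. apply HM1; auto. rewrite HSJ. apply HM2; auto.
    - intros n Hn. split; [|split;[|split]]. intros. rewrite Rmult_0_r. lra. lra. intros. lra. lra.
    - intros n Hn. split; [|split;[|split]]. intros j k Hj Hk. rewrite !Hle by auto. rewrite Rmult_0_r. lra.
      rewrite HSJ. lra. intros j Hj. rewrite Hle, HSJ by auto. lra. rewrite HSJ. lra. }
  set (t0 := lp_objective N J s0 x c z0).
  assert (Ht0 : Sat t0) by (apply HA; auto).
  pose proof (Hlow t0 Ht0) as Ht0p.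
  set (al := fun g : (nat -> R) -> R => coef g 0%nat).
  set (be := fun g : (nat -> R) -> R => g zerov).
  assert (Hrep : forall g tt, In g cs1 -> g (fun _ => tt) = be g + al g * tt).
  { intros g tt Hg. rewrite (aff_repr 1 g (Ha1 g Hg)). simpl. unfold be, al. ring. }
  assert (HSat : forall tt, Sat tt <-> forall g, In g cs1 -> 0 <= be g + al g * tt).
  { intros tt. unfold Sat. split; intros H g Hg; specialize (H g Hg); rewrite Hrep in *; auto. }
  set (pos := filter (fun g => if Rlt_dec 0 (al g) then true else false) cs1).
  assert (Hpos : forall g, In g pos <-> In g cs1 /\ 0 < al g).
  { intros g. unfold pos. rewrite filter_In. destruct (Rlt_dec 0 (al g)); split; intros [H1 H2]; auto; try discriminate; try lra. }
  set (val := fun g => - be g / al g).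
  destruct pos as [|P0 ps] eqn:Ep.
  - exfalso. assert (Sat (-1)).
    { apply HSat. intros g Hg. apply HSat with (g := g) in Ht0; auto.
      destruct (Rlt_dec 0 (al g)). assert (In g []) by (apply Hpos; auto). destruct H.
      nra. }
    pose proof (Hlow _ H). lra.
  - set (ts := lmax (val P0) (map val ps)).
    assert (Hin : exists P, In P cs1 /\ 0 < al P /\ ts = val P).
    { destruct (lmax_in (val P0) (map val ps)) as [E|E].
      - exists P0. assert (In P0 (P0 :: ps)) by (left; auto). apply Hpos in H. destruct H. auto.
      - apply in_map_iff in E. destruct E as [P [E HPi]]. exists P.
        assert (In P (P0 :: ps)) by (right; auto). apply Hpos in H. destruct H. auto. }
    destruct Hin as [Ps [HPs [HPs0 Ets]]].
    assert (Hge : forall tt, Sat tt -> ts <= tt).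
    { intros tt Ht. apply HSat with (g := Ps) in Ht; auto. rewrite Ets. unfold val.
      apply (Rmult_le_reg_r (al Ps)); auto. replace (- be Ps / al Ps * al Ps) with (- be Ps) by (field; lra). lra. }
    assert (Hts : Sat ts).
    { apply HSat. intros g Hg. destruct (Rlt_dec 0 (al g)) as [Hp|Hnp].
      - assert (Hgp : In g (P0 :: ps)) by (apply Hpos; auto).
        assert (val g <= ts). { destruct (lmax_ge (val P0) (map val ps)) as [H1 H2]. destruct Hgp as [E|E].
          subst; auto. apply H2. apply in_map; auto. }
        unfold val in H. apply (Rmult_le_compat_r (al g)) in H. 2: lra.
        replace (- be g / al g * al g) with (- be g) in H by (field; lra). lra.
      - pose proof (Hge t0 Ht0). apply HSat with (g := g) in Ht0; auto. nra. }
    destruct (HB ts Hts) as [zopt [Hzf Hzo]].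
    exists zopt. split; auto. split.
    + intros z Hz. pose proof (Hge _ (HA z Hz)). lra.
    + intros eps Heps. exists (lp_strategy N J x zopt). destruct (Part2 zopt Hzf) as [H1 H2]. split; auto. lra.
Qed.
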